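(* Fix $X=x$ and $\tau\in(0,1)$ (suppressed in notation). Suppose $D$ has support $\{0,1\}$ and $Z$ has support $\{0,1\}$, and for $y=(y_0,y_1)'\in\mathbb R^2$ define $$\Pi(y):=\big(P[Y\le y_D\mid Z=0]-\tau,\; P[Y\le y_D\mid Z=1]-\tau\big)',\qquad y_D:=(1-D)y_0+Dy_1 .$$ Let $q=(q(0),q(1))'$ satisfy $\Pi(q)=0$. Assume the conditional density $f_Y(y\mid D=d,Z=z)$ exists for each $y\in\mathbb R$ and $(d,z)\in\{0,1\}^2$, and that the Jacobian of $\Pi$ exists and equals $$\partial\Pi(y)=\begin{pmatrix} f_{Y,D}(y_0,0\mid Z=0) & f_{Y,D}(y_1,1\mid Z=0)\\ f_{Y,D}(y_0,0\mid Z=1) & f_{Y,D}(y_1,1\mid Z=1)\end{pmatrix},$$ where $f_{Y,D}(y,d\mid Z=z):=f_Y(y\mid D=d,Z=z)\,P[D=d\mid Z=z]$. (i) (Local) If $\partial\Pi$ is continuous and has full rank at $y=q$, then $q$ is identified in some sufficiently small open neighborhood $\mathcal L$ of $q$ in $\mathbb R^2$, i.e. $y=q$ is the only solution of $\Pi(y)=0$ in $\mathcal L$. (ii) (Global) Let $\mathcal L\subseteq\mathbb R^2$ contain $q$ and be covered by finitely many compact convex 2-dimensional polytopes $\{\mathcal L_j\}$, each containing $q$. Assume that for each $j$, $\partial\Pi$ is a $C^1$ Jacobian of $\Pi:\mathcal L_j\to\mathbb R^2$, and that, possibly after a (fixed) rearrangement of the two components of $\Pi$ (i.e. of the rows of $\partial\Pi$),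 for each $y\in\mathcal L_j$ and each subspace $L\subseteq\mathbb R^2$ spanned by a face of $\mathcal L_j$ that contains $y$, the linear map $\mathrm{proj}_L\circ\partial\Pi(y):L\to L$ has positive determinant. Then $y=q$ is the only solution of $\Pi(y)=0$ in $\mathcal L$.
   Context: A convex compact polytope is a bounded intersection of finitely many closed half-spaces; it is of full dimension in $\mathbb R^l$ if it has nonempty interior. A face of a polytope $\mathcal L$ is the intersection of $\mathcal L$ with any supporting hyperplane of $\mathcal L$ (so $\mathcal L$ itself is a face). The subspace spanned by a nonempty face is the translation to the origin of the minimal affine subspace containing that face. For a non-null subspace $L\subseteq\mathbb R^l$, $\mathrm{proj}_L$ is the orthogonal projection onto $L$; determinants of maps $L\to L$ are taken in coordinates of $L$. Faces spanning the null subspace (vertices) impose no condition. *)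

(* Defs.v *)
From Stdlib Require Import Reals List.
Open Scope R_scope.

(* Points of R^2 and 2x2 matrices (given by their two rows). *)
Definition R2 := (R * R)%type.
Definition mat2 := (R2 * R2)%type.

Definition dot (u v : R2) : R := fst u * fst v + snd u * snd v.
Definition vadd (u v : R2) : R2 := (fst u + fst v, snd u + snd v).
Definition vsub (u v : R2) : R2 := (fst u - fst v, snd u - snd v).
Definition vscal (t : R) (u : R2) : R2 := (t * fst u, t * snd u).
Definition mat_app (M : mat2) (v : R2) : R2 := (dot (fst M) v, dot (snd M) v).
Definition det2 (M : mat2) : R :=
  fst (fst M) * snd (snd M) - snd (fst M) * fst (snd M).
Definition swap_rows (M : mat2) : mat2 := (snd M, fst M).

(* sup-norm distances (induce the usual topology of R^2 / R^{2x2}) *)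
Definition vnorm (u : R2) : R := Rmax (Rabs (fst u)) (Rabs (snd u)).
Definition dist2 (u v : R2) : R := vnorm (vsub u v).
Definition mat_dist (M N : mat2) : R :=
  Rmax (dist2 (fst M) (fst N)) (dist2 (snd M) (snd N)).

(* ---------- the probabilistic model (X = x fixed) ----------
   Index d, z : bool, with false = 0, true = 1.
   p d z    = P[D = d | Z = z]
   F d z y  = P[Y <= y | D = d, Z = z]    (conditional CDF)
   f d z y  = f_Y(y | D = d, Z = z)      (conditional density)   *)

Definition is_cdf (G : R -> R) : Prop :=
  (forall a b, a <= b -> G a <= G b) /\
  (forall x eps, 0 < eps -> exists delta, 0 < delta /\
       forall t, x <= t < x + delta -> Rabs (G t - G x) < eps) /\
  (forall eps, 0 < eps -> exists M, forall t,
       (t <= - M -> Rabs (G t) < eps) /\ (M <= t -> Rabs (G t - 1) < eps)).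

Definition model (p : bool -> bool -> R) (F f : bool -> bool -> R -> R) : Prop :=
  (forall d z, 0 <= p d z) /\
  (forall z, p false z + p true z = 1) /\
  (* D has support {0,1} *)
  (forall d, exists z, 0 < p d z) /\
  (forall d z, is_cdf (F d z)) /\
  (* the conditional density exists at each y *)
  (forall d z y, derivable_pt_lim (F d z) y (f d z y)).

(* component z of Pi: P[Y <= y_D | Z = z] - tau, with y_D = (1-D) y_0 + D y_1,
   expanded by the law of total probability over D in {0,1}. *)
Definition Pi_comp (tau : R) (p : bool -> bool -> R) (F : bool -> bool -> R -> R)
  (z : bool) (y : R2) : R :=
  p false z * F false z (fst y) + p true z * F true z (snd y) - tau.

Definition Pi tau p F (y : R2) : R2 := (Pi_comp tau p F false y, Pi_comp tau p F true y).

Definition fYD (p : bool -> bool -> R) (f : bool -> bool -> R -> R) (t : R) (d z : bool) : R :=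
  f d z t * p d z.

Definition dPi p f (y : R2) : mat2 :=
  ((fYD p f (fst y) false false, fYD p f (snd y) true false),
   (fYD p f (fst y) false true,  fYD p f (snd y) true true)).

Definition is_jacobian (G : R2 -> R2) (y : R2) (M : mat2) : Prop :=
  forall eps, 0 < eps -> exists delta, 0 < delta /\ forall h,
    vnorm h < delta ->
    vnorm (vsub (vsub (G (vadd y h)) (G y)) (mat_app M h)) <= eps * vnorm h.

Definition cont_on (S : R2 -> Prop) (J : R2 -> mat2) : Prop :=
  forall y, S y -> forall eps, 0 < eps -> exists delta, 0 < delta /\
    forall u, S u -> dist2 u y < delta -> mat_dist (J u) (J y) < eps.

(* a finite family of closed half-spaces { y | a . y <= b } *)
Definition halfspaces := list (R2 * R).
Definition in_poly (H : halfspaces) (y : R2) : Prop :=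
  forall h, In h H -> dot (fst h) y <= snd h.

(* compact (closed by construction, bounded) convex polytope of full dimension *)
Definition is_polytope (H : halfspaces) : Prop :=
  (exists M, forall y, in_poly H y -> Rabs (fst y) <= M /\ Rabs (snd y) <= M) /\
  (exists y eps, 0 < eps /\ forall u, dist2 u y < eps -> in_poly H u).

Definition is_face (S Fc : R2 -> Prop) : Prop :=
  (forall y, Fc y <-> S y) \/
  exists a b, a <> (0, 0) /\ (forall y, S y -> dot a y <= b) /\
    (exists y, S y /\ dot a y = b) /\
    (forall y, Fc y <-> (S y /\ dot a y = b)).

(* the subspace spanned by Fc: linear span of the differences u - w, u, w in Fc
   (in R^2 every span is generated by two of the generators) *)
Definition span_face (Fc : R2 -> Prop) (v : R2) : Prop :=
  exists u1 w1 u2 w2 s t, Fc u1 /\ Fc w1 /\ Fc u2 /\ Fc w2 /\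
    v = vadd (vscal s (vsub u1 w1)) (vscal t (vsub u2 w2)).

(* det of proj_L o M : L -> L, computed in an orthonormal basis of L, is > 0.
   L = R^2: det M > 0;  L = R e with |e| = 1: e . (M e) > 0;  L = {0}: no condition. *)
Definition proj_det_pos (L : R2 -> Prop) (M : mat2) : Prop :=
  ((forall v, L v) -> 0 < det2 M) /\
  (forall e, dot e e = 1 -> (forall v, L v <-> exists t, v = vscal t e) ->
     0 < dot e (mat_app M e)).

(* Main.v *)
Require Import Defs.
From Stdlib Require Import Reals List Lra Psatz Classical.
Open Scope R_scope.

Lemma der_cont (f : R -> R) x l : derivable_pt_lim f x l ->
  forall eps, 0 < eps -> exists d, 0 < d /\ forall y, Rabs (y - x) < d -> Rabs (f y - f x) < eps.
Proof.
  intros H eps He.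
  destruct (H 1 Rlt_0_1) as [dl Hd].
  exists (Rmin dl (eps / (Rabs l + 1))). split.
  { apply Rmin_glb_lt. apply cond_pos. apply Rdiv_lt_0_compat; [lra| pose proof (Rabs_pos l); lra]. }
  intros y Hy.
  destruct (Req_dec y x) as [E|Nx]. { subst. rewrite Rminus_diag, Rabs_R0. lra. }
  assert (Hh : y - x <> 0) by lra.
  assert (Hy1 : Rabs (y - x) < dl) by (eapply Rlt_le_trans; [exact Hy| apply Rmin_l]).
  assert (Hy2 : Rabs (y - x) < eps / (Rabs l + 1)) by (eapply Rlt_le_trans; [exact Hy| apply Rmin_r]).
  specialize (Hd (y - x) Hh Hy1). replace (x + (y - x)) with y in Hd by ring.
  set (q := (f y - f x) / (y - x)) in *.
  assert (Eq : f y - f x = q * (y - x)) by (unfold q; field; exact Hh).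
  rewrite Eq, Rabs_mult.
  assert (Rabs q < Rabs l + 1).
  { replace q with ((q - l) + l) by ring. eapply Rle_lt_trans. apply Rabs_triang. lra. }
  assert (0 < Rabs (y - x)) by (apply Rabs_pos_lt; exact Hh).
  apply Rlt_le_trans with ((Rabs l + 1) * Rabs (y - x)).
  { apply Rmult_lt_compat_r; lra. }
  pose proof (Rabs_pos l).
  apply Rle_trans with ((Rabs l + 1) * (eps / (Rabs l + 1))).
  { apply Rmult_le_compat_l; lra. }
  right; field; lra.
Qed.

Lemma der_continuity (f f' : R -> R) : (forall x, derivable_pt_lim f x (f' x)) -> continuity f.
Proof.
  intros H x. apply derivable_continuous_pt. exists (f' x). apply H.
Qed.

Lemma mvt_gen (f f' : R -> R) x y : (forall c, derivable_pt_lim f c (f' c)) ->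
  exists c, Rmin x y <= c <= Rmax x y /\ f y - f x = f' c * (y - x).
Proof.
  intros H. destruct (Rtotal_order x y) as [Lt|[Eq|Gt]].
  - destruct (MVT_cor2 f f' x y Lt (fun c _ => H c)) as [c [E1 E2]].
    exists c. rewrite Rmin_left, Rmax_right by lra. split; [lra|exact E1].
  - subst. exists y. rewrite Rmin_left, Rmax_left by lra. split; [lra|ring].
  - destruct (MVT_cor2 f f' y x Gt (fun c _ => H c)) as [c [E1 E2]].
    exists c. rewrite Rmin_right, Rmax_left by lra. split; [lra|]. 
    replace (f y - f x) with (- (f x - f y)) by ring. rewrite E1. ring.
Qed.

Lemma der_nonneg (F : R -> R) x l : (forall a b, a <= b -> F a <= F b) ->
  derivable_pt_lim F x l -> 0 <= l.
Proof.
  intros Hm Hd. destruct (Rle_or_lt 0 l) as [|Hl]; [assumption|exfalso].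
  destruct (Hd (- l / 2)) as [d Hdd]. lra.
  assert (Hh : d / 2 <> 0) by (pose proof (cond_pos d); lra).
  assert (Habs : Rabs (d/2) < d) by (rewrite Rabs_right; pose proof (cond_pos d); lra).
  specialize (Hdd _ Hh Habs).
  assert (F x <= F (x + d/2)) by (apply Hm; pose proof (cond_pos d); lra).
  assert (0 <= (F (x + d / 2) - F x) / (d / 2)).
  { unfold Rdiv; apply Rmult_le_pos; [lra| apply Rlt_le, Rinv_0_lt_compat; pose proof (cond_pos d); lra]. }
  apply Rabs_def2 in Hdd. lra.
Qed.

Lemma pair_alg_core a0 a1 b0 b1 r ds dt :
  0 < b1 -> 0 < a0*b1 - b0*a1 -> 0 < a0 - r*a1 - r*b0 + r*r*b1 -> 0 < ds ->
  (dt + r*ds)*(a1*ds + b1*dt) <= 0 -> 0 < (a0 - r*a1)*ds + (b0 - r*b1)*dt.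
Proof.
  intros Hb1 Hw Hv Hds Hc.
  set (k := b0 - r*b1). set (X := a1*ds + b1*dt). set (Y := dt + r*ds).
  assert (E1 : (a0 - r*a1)*ds + k*dt = (a0 - r*a1 - r*b0 + r*r*b1)*ds + k*Y) by (unfold k, Y; ring).
  assert (E2 : b1*((a0 - r*a1)*ds + k*dt) = (a0*b1 - b0*a1)*ds + k*X) by (unfold k, X; ring).
  fold k. destruct (Rle_or_lt 0 (k*Y)) as [HkY|HkY].
  - rewrite E1. assert (0 < (a0 - r*a1 - r*b0 + r*r*b1)*ds) by (apply Rmult_lt_0_compat; lra). lra.
  - assert (HkX : 0 <= k*X).
    { assert (Hp : (k*X)*(k*Y) <= 0).
      { replace ((k*X)*(k*Y)) with ((k*k)*(Y*X)) by ring.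
        assert (0 <= k*k) by nra. fold X Y in Hc. nra. }
      nra. }
    assert (0 < b1*((a0 - r*a1)*ds + k*dt)).
    { rewrite E2. assert (0 < (a0*b1 - b0*a1)*ds) by (apply Rmult_lt_0_compat; lra). lra. }
    nra.
Qed.

Lemma abs_lt_e x X e : Rabs (x - X) < e -> X - e < x < X + e.
Proof. intros H. apply Rabs_def2 in H. lra. Qed.

Lemma abs_le x u : Rabs x <= u -> - u <= x <= u.
Proof. intros H. split; [pose proof (Rabs_pos x)|]; destruct (Rcase_abs x); [rewrite Rabs_left in H|rewrite Rabs_right in H|rewrite Rabs_left in H|rewrite Rabs_right in H]; lra. Qed.

Lemma pair_alg A0 A1 B0 B1 r : 0 < B1 -> 0 < A0*B1 - B0*A1 -> 0 < A0 - r*A1 - r*B0 + r*r*B1 ->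
  exists e, 0 < e /\ forall a0 a1 b0 b1 ds dt,
    Rabs (a0 - A0) < e -> Rabs (a1 - A1) < e -> Rabs (b0 - B0) < e -> Rabs (b1 - B1) < e ->
    0 < ds -> (dt + r*ds)*(a1*ds + b1*dt) <= 0 -> 0 < (a0 - r*a1)*ds + (b0 - r*b1)*dt.
Proof.
  intros HB1 HD HQ.
  set (Q := A0 - r*A1 - r*B0 + r*r*B1) in *.
  set (D := A0*B1 - B0*A1) in *.
  set (K := 1 + 2*Rabs r + r*r).
  set (K2 := Rabs A0 + Rabs A1 + Rabs B0 + Rabs B1 + 2).
  assert (HK : 1 <= K) by (unfold K; pose proof (Rabs_pos r); nra).
  assert (HK2 : 2 <= K2) by (unfold K2; pose proof (Rabs_pos A0); pose proof (Rabs_pos A1);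
     pose proof (Rabs_pos B0); pose proof (Rabs_pos B1); lra).
  exists (Rmin 1 (Rmin (B1/2) (Rmin (Q/(2*K)) (D/(2*K2))))).
  assert (P1 : 0 < Q/(2*K)) by (apply Rdiv_lt_0_compat; lra).
  assert (P2 : 0 < D/(2*K2)) by (apply Rdiv_lt_0_compat; lra).
  split.
  { repeat apply Rmin_glb_lt; lra. }
  intros a0 a1 b0 b1 ds dt H0 H1 H2 H3 Hds Hc.
  set (e := Rmin 1 (Rmin (B1/2) (Rmin (Q/(2*K)) (D/(2*K2))))) in *.
  assert (Ee1 : e <= 1) by apply Rmin_l.
  assert (Ee2 : e <= B1/2) by (eapply Rle_trans; [apply Rmin_r| apply Rmin_l]).
  assert (Ee3 : e <= Q/(2*K)) by (eapply Rle_trans; [apply Rmin_r|]; eapply Rle_trans; [apply Rmin_r| apply Rmin_l]).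
  assert (Ee4 : e <= D/(2*K2)) by (eapply Rle_trans; [apply Rmin_r|]; eapply Rle_trans; [apply Rmin_r| apply Rmin_r]).
  assert (Ee3' : e * (2*K) <= Q) by (apply (Rmult_le_compat_r (2*K)) in Ee3; [|lra]; replace (Q / (2*K) * (2*K)) with Q in Ee3 by (field; lra); exact Ee3).
  assert (Ee4' : e * (2*K2) <= D) by (apply (Rmult_le_compat_r (2*K2)) in Ee4; [|lra]; replace (D / (2*K2) * (2*K2)) with D in Ee4 by (field; lra); exact Ee4).
  clearbody e. apply pair_alg_core; try assumption.
  - apply abs_lt_e in H3. lra.
  -
    assert (E : a0*b1 - b0*a1 - D = (a0 - A0)*b1 + A0*(b1 - B1) - (b0 - B0)*a1 - B0*(a1 - A1)) by (unfold D; ring).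
    assert (Hb : Rabs b1 <= Rabs B1 + 1).
    { replace b1 with ((b1 - B1) + B1) by ring. eapply Rle_trans; [apply Rabs_triang|]. lra. }
    assert (Ha : Rabs a1 <= Rabs A1 + 1).
    { replace a1 with ((a1 - A1) + A1) by ring. eapply Rle_trans; [apply Rabs_triang|]. lra. }
    assert (T1 : Rabs ((a0 - A0)*b1) <= e * (Rabs B1 + 1)) by (rewrite Rabs_mult; apply Rmult_le_compat; try apply Rabs_pos; lra).
    assert (T2 : Rabs (A0*(b1 - B1)) <= e * Rabs A0) by (rewrite Rabs_mult, Rmult_comm; apply Rmult_le_compat_r; [apply Rabs_pos|lra]).
    assert (T3 : Rabs ((b0 - B0)*a1) <= e * (Rabs A1 + 1)) by (rewrite Rabs_mult; apply Rmult_le_compat; try apply Rabs_pos; lra).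
    assert (T4 : Rabs (B0*(a1 - A1)) <= e * Rabs B0) by (rewrite Rabs_mult, Rmult_comm; apply Rmult_le_compat_r; [apply Rabs_pos|lra]).
    apply abs_le in T1. apply abs_le in T2. apply abs_le in T3. apply abs_le in T4.
    assert (e * K2 = e * (Rabs B1 + 1) + e * Rabs A0 + e * (Rabs A1 + 1) + e * Rabs B0) by (unfold K2; ring).
    lra.
  - assert (E : a0 - r*a1 - r*b0 + r*r*b1 - Q = (a0 - A0) - r*(a1 - A1) - r*(b0 - B0) + r*r*(b1 - B1)) by (unfold Q; ring).
    assert (T1 : Rabs (a0 - A0) <= e) by lra.
    assert (T2 : Rabs (r*(a1 - A1)) <= e * Rabs r) by (rewrite Rabs_mult, Rmult_comm; apply Rmult_le_compat_r; [apply Rabs_pos|lra]).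
    assert (T3 : Rabs (r*(b0 - B0)) <= e * Rabs r) by (rewrite Rabs_mult, Rmult_comm; apply Rmult_le_compat_r; [apply Rabs_pos|lra]).
    assert (T4 : Rabs (r*r*(b1 - B1)) <= e * (r*r)) by (rewrite Rabs_mult, Rmult_comm, (Rabs_right (r*r)) by nra; apply Rmult_le_compat_r; [nra|lra]).
    apply abs_le in T1. apply abs_le in T2. apply abs_le in T3. apply abs_le in T4.
    assert (e * K = e + e * Rabs r + e * Rabs r + e * (r*r)) by (unfold K; ring).
    lra.
Qed.

Definition P_ (H : halfspaces) (s t : R) := in_poly H (s, t).
Definition IsHi H s t := in_poly H (s,t) /\ forall t', in_poly H (s,t') -> t' <= t.
Definition IsLo H s t := in_poly H (s,t) /\ forall t', in_poly H (s,t') -> t <= t'.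
Definition bnd (H : halfspaces) := exists M, forall y, in_poly H y -> Rabs (fst y) <= M /\ Rabs (snd y) <= M.

Lemma finite_min {A} (l : list A) (Q : A -> R -> Prop) :
  (forall x e e', Q x e -> 0 < e' <= e -> Q x e') ->
  (forall x, In x l -> exists e, 0 < e /\ Q x e) ->
  exists e, 0 < e /\ forall x, In x l -> Q x e.
Proof.
  intros Hm. induction l as [|y l IH]; intros Hl.
  - exists 1. split; [lra| intros x []].
  - destruct (Hl y (or_introl eq_refl)) as [e1 [He1 Q1]].
    destruct IH as [e2 [He2 Q2]]. { intros x Hx. apply Hl. right; exact Hx. }
    exists (Rmin e1 e2). split. { apply Rmin_glb_lt; lra. }
    intros x [<-|Hx].
    + apply (Hm _ e1); [exact Q1|]. split; [apply Rmin_glb_lt; lra| apply Rmin_l].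
    + apply (Hm _ e2); [apply Q2; exact Hx|]. split; [apply Rmin_glb_lt; lra| apply Rmin_r].
Qed.

Lemma dot_comb a u v l : dot a (fst u + l * (fst v - fst u), snd u + l * (snd v - snd u)) =
  dot a u + l * (dot a v - dot a u).
Proof. unfold dot; simpl; ring. Qed.

Lemma poly_convex H u v l : in_poly H u -> in_poly H v -> 0 <= l <= 1 ->
  in_poly H (fst u + l * (fst v - fst u), snd u + l * (snd v - snd u)).
Proof.
  intros Hu Hv Hl h Hh. rewrite dot_comb. specialize (Hu h Hh). specialize (Hv h Hh).
  assert (l * (dot (fst h) v - dot (fst h) u) <= l * (snd h - dot (fst h) u)) by (apply Rmult_le_compat_l; lra).
  nra.
Qed.

Lemma slice_convex H s t1 t2 t : in_poly H (s,t1) -> in_poly H (s,t2) -> t1 <= t <= t2 -> in_poly H (s,t).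
Proof.
  intros H1 H2 Ht. destruct (Req_dec t1 t2) as [E|N].
  - subst. replace t with t2 by lra. exact H2.
  - pose proof (poly_convex H (s,t1) (s,t2) ((t - t1)/(t2 - t1)) H1 H2) as K. simpl in K.
    replace (s + (t - t1) / (t2 - t1) * (s - s)) with s in K by ring.
    replace (t1 + (t - t1) / (t2 - t1) * (t2 - t1)) with t in K by (field; lra).
    apply K. split. apply Rmult_le_pos; [lra| apply Rlt_le, Rinv_0_lt_compat; lra].
    apply (Rmult_le_reg_r (t2 - t1)); [lra|]. unfold Rdiv. rewrite Rmult_assoc, Rinv_l by lra. lra.
Qed.

Lemma le_of_eps x b : (forall e, 0 < e -> x <= b + e) -> x <= b.
Proof.
  intros H. destruct (Rle_or_lt x b) as [|Hl]; [assumption|].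
  specialize (H ((x - b)/2)). lra.
Qed.

Lemma hi_exists H s t0 : bnd H -> in_poly H (s,t0) -> exists t, IsHi H s t.
Proof.
  intros [M HM] H0.
  set (E := fun t => in_poly H (s,t)).
  assert (Hb : bound E). { exists M. intros t Ht. destruct (HM _ Ht) as [_ K]. simpl in K.
    pose proof (Rle_abs t). lra. }
  destruct (completeness E Hb (ex_intro _ t0 H0)) as [m [Hub Hlub]].
  assert (Hin : in_poly H (s,m)).
  { intros h Hh. apply le_of_eps. intros e He.
    destruct h as [a b]. simpl.
    set (e' := e / (Rabs (snd a) + 1)).
    assert (He' : 0 < e') by (unfold e'; apply Rdiv_lt_0_compat; [lra| pose proof (Rabs_pos (snd a)); lra]).
    assert (exists t, E t /\ m - e' < t).
    { apply Classical_Prop.NNPP. intros Hn. 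
      assert (is_upper_bound E (m - e')).
      { intros t Ht. destruct (Rle_or_lt t (m - e')) as [|Hl]; [assumption|]. exfalso. apply Hn. exists t. split; assumption. }
      specialize (Hlub _ H1). lra. }
    destruct H1 as [t [Et Ht]].
    specialize (Hub t Et). specialize (Et (a,b) Hh). simpl in Et.
    unfold dot in *; simpl in *.
    assert (snd a * m - snd a * t <= Rabs (snd a) * e').
    { replace (snd a * m - snd a * t) with (snd a * (m - t)) by ring.
      eapply Rle_trans; [apply Rle_abs|]. rewrite Rabs_mult, (Rabs_right (m - t)) by lra.
      apply Rmult_le_compat_l; [apply Rabs_pos| lra]. }
    assert (Rabs (snd a) * e' <= e).
    { unfold e'. pose proof (Rabs_pos (snd a)).
      apply Rle_trans with ((Rabs (snd a) + 1) * (e / (Rabs (snd a) + 1))).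
      apply Rmult_le_compat_r; [apply Rlt_le; apply Rdiv_lt_0_compat; lra| lra].
      right; field; lra. }
    lra. }
  exists m. split; [exact Hin|]. intros t' Ht'. apply Hub. exact Ht'.
Qed.

Lemma tight_exists H s t : IsHi H s t -> exists a b, In (a,b) H /\ 0 < snd a /\ dot a (s,t) = b.
Proof.
  intros [Hin Hmax]. apply Classical_Prop.NNPP. intros Hn.
  assert (Hall : forall h, In h H -> exists e, 0 < e /\ (0 < snd (fst h) -> snd (fst h) * e <= snd h - dot (fst h) (s,t))).
  { intros [a b] Hh. simpl. destruct (Rlt_or_le 0 (snd a)) as [Ha|Ha].
    - assert (dot a (s,t) < b).
      { destruct (Rle_lt_or_eq_dec _ _ (Hin (a,b) Hh)) as [|E]; [assumption|].
        exfalso. apply Hn. exists a, b. auto. }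
      exists ((b - dot a (s,t)) / snd a). split. apply Rdiv_lt_0_compat; lra.
      intros _. right. field. lra.
    - exists 1. split; [lra|]. intros; lra. }
  destruct (finite_min H (fun h e => 0 < snd (fst h) -> snd (fst h) * e <= snd h - dot (fst h) (s,t))) as [e [He Hq]].
  { intros x e e' Hq He' Ha. specialize (Hq Ha). nra. }
  { exact Hall. }
  assert (in_poly H (s, t + e)).
  { intros [a b] Hh. specialize (Hq _ Hh). specialize (Hin _ Hh). simpl in *. unfold dot in *; simpl in *.
    destruct (Rlt_or_le 0 (snd a)) as [Ha|Ha]. specialize (Hq Ha). lra. nra. }
  specialize (Hmax _ H0). lra.
Qed.

Definition lin (a : R2) (b s : R) := (b - fst a * s) / snd a.

Lemma lin_on a b s : snd a <> 0 -> dot a (s, lin a b s) = b.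
Proof. intros. unfold dot, lin; simpl. field. auto. Qed.

Lemma on_lin a b s t : snd a <> 0 -> dot a (s,t) = b -> t = lin a b s.
Proof. intros Ha E. unfold dot, lin in *; simpl in *. rewrite <- E. field. auto. Qed.

Lemma ishi_lin H a b s : In (a,b) H -> 0 < snd a -> in_poly H (s, lin a b s) -> IsHi H s (lin a b s).
Proof.
  intros Hh Ha Hin. split; [exact Hin|]. intros t' Ht'. specialize (Ht' _ Hh). simpl in Ht'.
  unfold dot, lin in *; simpl in *. apply (Rmult_le_reg_l (snd a)); [lra|]. field_simplify; lra.
Qed.

Lemma lin_affine a b s1 s2 : snd a <> 0 -> lin a b s2 = lin a b s1 - (fst a / snd a) * (s2 - s1).
Proof. intros. unfold lin. field. auto. Qed.

Lemma lin_in_between H a b s1 s2 s : In (a,b) H -> 0 < snd a ->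
  in_poly H (s1, lin a b s1) -> in_poly H (s2, lin a b s2) -> s1 <= s <= s2 -> in_poly H (s, lin a b s).
Proof.
  intros Hh Ha H1 H2 Hs. destruct (Req_dec s1 s2) as [E|N].
  - subst. replace s with s2 by lra. exact H2.
  - pose proof (poly_convex H _ _ ((s - s1)/(s2 - s1)) H1 H2) as K. simpl in K.
    replace (s1 + (s - s1) / (s2 - s1) * (s2 - s1)) with s in K by (field; lra).
    replace (lin a b s1 + (s - s1) / (s2 - s1) * (lin a b s2 - lin a b s1)) with (lin a b s) in K.
    2:{ rewrite (lin_affine a b s1 s2), (lin_affine a b s1 s) by lra. field. lra. }
    apply K. split. apply Rmult_le_pos; [lra| apply Rlt_le, Rinv_0_lt_compat; lra].
    apply (Rmult_le_reg_r (s2 - s1)); [lra|]. unfold Rdiv. rewrite Rmult_assoc, Rinv_l by lra. lra.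
Qed.

Lemma affine_limit (f : R -> R) k s0 d b : 0 < d -> (forall s, f s = f s0 + k * (s - s0)) ->
  (forall s, s0 < s <= s0 + d -> f s <= b) -> f s0 <= b.
Proof.
  intros Hd Hf Hb. apply le_of_eps. intros e He.
  set (s := s0 + Rmin d (e / (Rabs k + 1))).
  assert (Hm : 0 < Rmin d (e / (Rabs k + 1))) by (apply Rmin_glb_lt; [lra| apply Rdiv_lt_0_compat; pose proof (Rabs_pos k); lra]).
  assert (Hs : s0 < s <= s0 + d) by (unfold s; split; [lra| pose proof (Rmin_l d (e / (Rabs k + 1))); lra]).
  specialize (Hb s Hs). rewrite Hf in Hb.
  assert (k * (s - s0) >= - e).
  { assert (Hle : Rmin d (e / (Rabs k + 1)) <= e / (Rabs k + 1)) by apply Rmin_r.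
    unfold s. replace (s0 + Rmin d (e / (Rabs k + 1)) - s0) with (Rmin d (e / (Rabs k + 1))) by ring.
    pose proof (Rabs_pos k). pose proof (Rle_abs (-k)). rewrite Rabs_Ropp in H0.
    assert (Rabs k * Rmin d (e / (Rabs k + 1)) <= e).
    { apply Rle_trans with ((Rabs k + 1) * (e / (Rabs k + 1))).
      apply Rmult_le_compat; lra. right; field; lra. }
    nra. }
  lra.
Qed.

Lemma upper_right_edge H s0 d0 : bnd H -> 0 < d0 ->
  (forall s, s0 <= s <= s0 + d0 -> exists t, in_poly H (s,t)) ->
  exists d a b, 0 < d /\ d <= d0 /\ In (a,b) H /\ 0 < snd a /\
    forall s, s0 <= s <= s0 + d -> IsHi H s (lin a b s).
Proof.
  intros Hbd Hd0 Hne.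
  set (S := fun a b s => s0 < s <= s0 + d0 /\ in_poly H (s, lin a b s)).
  assert (Hex : exists a b, In (a,b) H /\ 0 < snd a /\ forall d', 0 < d' -> exists s, S a b s /\ s < s0 + d').
  { apply Classical_Prop.NNPP. intros Hn.
    assert (Hall : forall h, In h H -> exists e, 0 < e /\
       (0 < snd (fst h) -> forall s, S (fst h) (snd h) s -> s0 + e <= s)).
    { intros [a b] Hh. simpl. destruct (Rlt_or_le 0 (snd a)) as [Ha|Ha].
      - apply Classical_Prop.NNPP. intros Hn2. apply Hn. exists a, b. split; [exact Hh|]. split; [exact Ha|].
        intros d' Hd'. apply Classical_Prop.NNPP. intros Hn3. apply Hn2. exists d'. split; [exact Hd'|].
        intros _ s Hs. destruct (Rle_or_lt (s0 + d') s) as [|Hl]; [assumption|]. exfalso. apply Hn3. exists s. auto.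
      - exists 1. split; [lra|]. intros; lra. }
    destruct (finite_min H (fun h e => 0 < snd (fst h) -> forall s, S (fst h) (snd h) s -> s0 + e <= s)) as [e [He Hq]].
    { intros x e e' Hq He' Ha s Hs. specialize (Hq Ha s Hs). lra. }
    { exact Hall. }
    set (s := s0 + Rmin e d0 / 2).
    assert (Hm : 0 < Rmin e d0) by (apply Rmin_glb_lt; lra).
    assert (Hs : s0 < s <= s0 + d0) by (unfold s; pose proof (Rmin_r e d0); lra).
    destruct (Hne s ltac:(lra)) as [t0 Ht0].
    destruct (hi_exists H s t0 Hbd Ht0) as [t Ht].
    destruct (tight_exists H s t Ht) as [a [b [Hh [Ha Hdot]]]].
    assert (E : t = lin a b s) by (apply on_lin; lra).
    specialize (Hq _ Hh Ha s). simpl in Hq. assert (S a b s) by (split; [exact Hs| rewrite <- E; apply Ht]).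
    specialize (Hq H0). pose proof (Rmin_l e d0). unfold s in Hq. lra. }
  destruct Hex as [a [b [Hh [Ha Hcl]]]].
  destruct (Hcl d0 Hd0) as [s1 [[Hs1 Hin1] _]].
  assert (Hint : forall s, s0 < s <= s1 -> in_poly H (s, lin a b s)).
  { intros s Hs. destruct (Hcl (s - s0) ltac:(lra)) as [s' [[Hs' Hin'] Hlt]].
    apply (lin_in_between H a b s' s1 s Hh Ha Hin' Hin1). lra. }
  exists (s1 - s0), a, b. split; [lra|]. split; [lra|]. split; [exact Hh|]. split; [exact Ha|].
  intros s Hs. apply ishi_lin; try assumption.
  destruct (Rle_lt_or_eq_dec s0 s (proj1 Hs)) as [Hlt|Heq].
  - apply Hint. lra.
  - subst s. intros [a' b'] Hh'. simpl.
    apply (affine_limit (fun s => dot a' (s, lin a b s)) (fst a' - snd a' * (fst a / snd a)) s0 (s1 - s0)).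
    + lra.
    + intros s. unfold dot, lin; simpl. field. lra.
    + intros s Hs'. apply (Hint s ltac:(lra) (a',b') Hh').
Qed.

Lemma in_poly_map (f : R2 * R -> R2 * R) (g : R2 -> R2) H u :
  (forall h v, dot (fst (f h)) v = dot (fst h) (g v) /\ snd (f h) = snd h) ->
  (in_poly (map f H) u <-> in_poly H (g u)).
Proof.
  intros Hf. split.
  - intros Hp h Hh. destruct (Hf h u) as [E1 E2]. rewrite <- E1, <- E2. apply Hp. apply in_map. exact Hh.
  - intros Hp h Hh. apply in_map_iff in Hh. destruct Hh as [h' [<- Hh']].
    destruct (Hf h' u) as [E1 E2]. rewrite E1, E2. apply Hp. exact Hh'.
Qed.

Definition reflT (h : R2 * R) : R2 * R := ((fst (fst h), - snd (fst h)), snd h).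
Definition reflS (h : R2 * R) : R2 * R := ((- fst (fst h), snd (fst h)), snd h).

Lemma inT H s t : in_poly (map reflT H) (s,t) <-> in_poly H (s, -t).
Proof. apply (in_poly_map reflT (fun v => (fst v, - snd v))). intros h v. unfold dot, reflT; simpl. split; [ring|reflexivity]. Qed.
Lemma inS H s t : in_poly (map reflS H) (s,t) <-> in_poly H (-s, t).
Proof. apply (in_poly_map reflS (fun v => (- fst v, snd v))). intros h v. unfold dot, reflS; simpl. split; [ring|reflexivity]. Qed.

Lemma bndT H : bnd H -> bnd (map reflT H).
Proof. intros [M HM]. exists M. intros [s t] Hy. apply inT in Hy. destruct (HM _ Hy) as [A B]. simpl in *. rewrite Rabs_Ropp in B. auto. Qed.
Lemma bndS H : bnd H -> bnd (map reflS H).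
Proof. intros [M HM]. exists M. intros [s t] Hy. apply inS in Hy. destruct (HM _ Hy) as [A B]. simpl in *. rewrite Rabs_Ropp in A. auto. Qed.

Lemma hiT H s t : IsHi (map reflT H) s t <-> IsLo H s (- t).
Proof.
  unfold IsHi, IsLo. split.
  - intros [A B]. split; [apply inT; exact A|]. intros t' Ht'. assert (in_poly (map reflT H) (s, - t')) by (apply inT; rewrite Ropp_involutive; exact Ht').
    specialize (B _ H0). lra.
  - intros [A B]. split; [apply inT; exact A|]. intros t' Ht'. apply inT in Ht'. specialize (B _ Ht'). lra.
Qed.
Lemma hiS H s t : IsHi (map reflS H) s t <-> IsHi H (- s) t.
Proof.
  unfold IsHi. split.
  - intros [A B]. split; [apply inS; exact A|]. intros t' Ht'. apply B. apply inS. exact Ht'.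
  - intros [A B]. split; [apply inS; exact A|]. intros t' Ht'. apply B. apply inS. exact Ht'.
Qed.

Lemma lo_exists H s t0 : bnd H -> in_poly H (s,t0) -> exists t, IsLo H s t.
Proof.
  intros Hb Ht. destruct (hi_exists (map reflT H) s (- t0) (bndT H Hb)) as [t Ht'].
  { apply inT. rewrite Ropp_involutive. exact Ht. }
  exists (- t). apply hiT. exact Ht'.
Qed.

Lemma inmapT H a b : In (a,b) (map reflT H) -> In ((fst a, - snd a), b) H.
Proof.
  intros Hi. apply in_map_iff in Hi. destruct Hi as [[[x y] c] [E Hi]]. unfold reflT in E; simpl in E.
  inversion E. subst. simpl. rewrite Ropp_involutive. exact Hi.
Qed.
Lemma inmapS H a b : In (a,b) (map reflS H) -> In ((- fst a, snd a), b) H.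
Proof.
  intros Hi. apply in_map_iff in Hi. destruct Hi as [[[x y] c] [E Hi]]. unfold reflS in E; simpl in E.
  inversion E. subst. simpl. rewrite Ropp_involutive. exact Hi.
Qed.

Lemma lower_right_edge H s0 d0 : bnd H -> 0 < d0 ->
  (forall s, s0 <= s <= s0 + d0 -> exists t, in_poly H (s,t)) ->
  exists d a b, 0 < d /\ d <= d0 /\ In (a,b) H /\ snd a < 0 /\
    forall s, s0 <= s <= s0 + d -> IsLo H s (lin a b s).
Proof.
  intros Hb Hd Hne.
  destruct (upper_right_edge (map reflT H) s0 d0 (bndT H Hb) Hd) as [d [a [b [Hd1 [Hd2 [Hh [Ha Hs]]]]]]].
  { intros s Hs. destruct (Hne s Hs) as [t Ht]. exists (- t). apply inT. rewrite Ropp_involutive. exact Ht. }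
  exists d, (fst a, - snd a), b. split; [exact Hd1|]. split; [exact Hd2|]. split; [apply inmapT; exact Hh|].
  split; [simpl; lra|]. intros s Hsr. specialize (Hs s Hsr). apply hiT in Hs.
  replace (lin (fst a, - snd a) b s) with (- lin a b s); [exact Hs|]. unfold lin; simpl. field. lra.
Qed.

Lemma upper_left_edge H s0 d0 : bnd H -> 0 < d0 ->
  (forall s, s0 - d0 <= s <= s0 -> exists t, in_poly H (s,t)) ->
  exists d a b, 0 < d /\ d <= d0 /\ In (a,b) H /\ 0 < snd a /\
    forall s, s0 - d <= s <= s0 -> IsHi H s (lin a b s).
Proof.
  intros Hb Hd Hne.
  destruct (upper_right_edge (map reflS H) (- s0) d0 (bndS H Hb) Hd) as [d [a [b [Hd1 [Hd2 [Hh [Ha Hs]]]]]]].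
  { intros s Hs. destruct (Hne (- s) ltac:(lra)) as [t Ht]. exists t. apply inS. exact Ht. }
  exists d, (- fst a, snd a), b. split; [exact Hd1|]. split; [exact Hd2|]. split; [apply inmapS; exact Hh|].
  split; [simpl; lra|]. intros s Hsr. specialize (Hs (- s) ltac:(lra)). apply (proj1 (hiS H _ _)) in Hs.
  try rewrite Ropp_involutive in Hs.
  replace (lin (- fst a, snd a) b s) with (lin a b (- s)); [exact Hs|]. unfold lin; simpl. field. lra.
Qed.

Lemma lower_left_edge H s0 d0 : bnd H -> 0 < d0 ->
  (forall s, s0 - d0 <= s <= s0 -> exists t, in_poly H (s,t)) ->
  exists d a b, 0 < d /\ d <= d0 /\ In (a,b) H /\ snd a < 0 /\
    forall s, s0 - d <= s <= s0 -> IsLo H s (lin a b s).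
Proof.
  intros Hb Hd Hne.
  destruct (upper_left_edge (map reflT H) s0 d0 (bndT H Hb) Hd) as [d [a [b [Hd1 [Hd2 [Hh [Ha Hs]]]]]]].
  { intros s Hs. destruct (Hne s Hs) as [t Ht]. exists (- t). apply inT. rewrite Ropp_involutive. exact Ht. }
  exists d, (fst a, - snd a), b. split; [exact Hd1|]. split; [exact Hd2|]. split; [apply inmapT; exact Hh|].
  split; [simpl; lra|]. intros s Hsr. specialize (Hs s Hsr). apply hiT in Hs.
  replace (lin (fst a, - snd a) b s) with (- lin a b s); [exact Hs|]. unfold lin; simpl. field. lra.
Qed.

Record Dat := mkDat { g0 : R -> R; g1 : R -> R; h0 : R -> R; h1 : R -> R;
                      a0 : R -> R; a1 : R -> R; b0 : R -> R; b1 : R -> R }.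

Definition mA0 D (u : R2) := a0 D (fst u).
Definition mA1 D (u : R2) := a1 D (fst u).
Definition mB0 D (u : R2) := b0 D (snd u).
Definition mB1 D (u : R2) := b1 D (snd u).
Definition detD D u := mA0 D u * mB1 D u - mB0 D u * mA1 D u.
Definition Qf D u r := mA0 D u - r * mA1 D u - r * mB0 D u + r * r * mB1 D u.
Definition G0 D (u : R2) := g0 D (fst u) + h0 D (snd u).
Definition G1 D (u : R2) := g1 D (fst u) + h1 D (snd u).
Definition Lp D c' r u := G0 D u - r * (G1 D u - c').

Record CoreHyp (D : Dat) (H : halfspaces) : Prop := {
  ch_dg0 : forall s, derivable_pt_lim (g0 D) s (a0 D s);
  ch_dg1 : forall s, derivable_pt_lim (g1 D) s (a1 D s);
  ch_dh0 : forall s, derivable_pt_lim (h0 D) s (b0 D s);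
  ch_dh1 : forall s, derivable_pt_lim (h1 D) s (b1 D s);
  ch_mg0 : forall x y, x <= y -> g0 D x <= g0 D y;
  ch_mg1 : forall x y, x <= y -> g1 D x <= g1 D y;
  ch_mh0 : forall x y, x <= y -> h0 D x <= h0 D y;
  ch_mh1 : forall x y, x <= y -> h1 D x <= h1 D y;
  ch_bnd : bnd H;
  ch_pos : forall u, in_poly H u -> 0 < mA0 D u /\ 0 < mB1 D u /\ 0 < detD D u;
  ch_cont : forall u, in_poly H u -> forall e, 0 < e -> exists d, 0 < d /\ forall v, in_poly H v -> dist2 v u < d ->
     Rabs (mA0 D v - mA0 D u) < e /\ Rabs (mA1 D v - mA1 D u) < e /\ Rabs (mB0 D v - mB0 D u) < e /\ Rabs (mB1 D v - mB1 D u) < e;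
  ch_edge : forall a b, In (a,b) H -> snd a <> 0 -> forall u1 u2, in_poly H u1 -> in_poly H u2 ->
     dot a u1 = b -> dot a u2 = b -> u1 <> u2 -> forall u, in_poly H u -> dot a u = b -> 0 < Qf D u (fst a / snd a)
}.

Definition segp (Y1 Y2 : R2) l : R2 := (fst Y1 + l * (fst Y2 - fst Y1), snd Y1 + l * (snd Y2 - snd Y1)).

Lemma abs_comb x y l d : 0 <= l <= 1 -> Rabs x < d -> Rabs y < d -> Rabs (x + l * (y - x)) < d.
Proof.
  intros Hl Hx Hy. replace (x + l*(y - x)) with ((1 - l)*x + l*y) by ring.
  eapply Rle_lt_trans; [apply Rabs_triang|]. rewrite !Rabs_mult, (Rabs_right (1 - l)), (Rabs_right l) by lra.
  assert ((1 - l) * Rabs x <= (1 - l) * d) by (apply Rmult_le_compat_l; lra).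
  assert (l * Rabs y <= l * d) by (apply Rmult_le_compat_l; lra).
  destruct (Rlt_or_le 0 l).
  - assert (l * Rabs y < l * d) by (apply Rmult_lt_compat_l; lra). lra.
  - assert (l = 0) by lra. subst. lra.
Qed.

Lemma dist2_lt u v d : dist2 u v < d <-> Rabs (fst u - fst v) < d /\ Rabs (snd u - snd v) < d.
Proof.
  unfold dist2, vnorm, vsub; simpl. split.
  - intros Hd. split; eapply Rle_lt_trans; [apply Rmax_l| exact Hd| apply Rmax_r| exact Hd].
  - intros [A B]. apply Rmax_lub_lt; assumption.
Qed.

Lemma segp_ok H Y1 Y2 X d l : in_poly H Y1 -> in_poly H Y2 -> dist2 Y1 X < d -> dist2 Y2 X < d -> 0 <= l <= 1 ->
  in_poly H (segp Y1 Y2 l) /\ dist2 (segp Y1 Y2 l) X < d.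
Proof.
  intros H1 H2 D1 D2 Hl. split. apply poly_convex; assumption.
  apply dist2_lt in D1, D2. apply dist2_lt. unfold segp; simpl. destruct D1, D2. split.
  - replace (fst Y1 + l * (fst Y2 - fst Y1) - fst X) with ((fst Y1 - fst X) + l * ((fst Y2 - fst X) - (fst Y1 - fst X))) by ring.
    apply abs_comb; assumption.
  - replace (snd Y1 + l * (snd Y2 - snd Y1) - snd X) with ((snd Y1 - snd X) + l * ((snd Y2 - snd X) - (snd Y1 - snd X))) by ring.
    apply abs_comb; assumption.
Qed.

Lemma seg_fst H Y1 Y2 X d x : in_poly H Y1 -> in_poly H Y2 -> dist2 Y1 X < d -> dist2 Y2 X < d ->
  Rmin (fst Y1) (fst Y2) <= x <= Rmax (fst Y1) (fst Y2) ->
  exists u, in_poly H u /\ dist2 u X < d /\ fst u = x.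
Proof.
  intros H1 H2 D1 D2 Hx. destruct (Req_dec (fst Y1) (fst Y2)) as [E|N].
  - exists Y1. split; [exact H1|]. split; [exact D1|].
    rewrite E, Rmin_left, Rmax_left in Hx by lra. lra.
  - set (l := (x - fst Y1) / (fst Y2 - fst Y1)).
    assert (Hl : 0 <= l <= 1).
    { unfold l. destruct (Rlt_or_le (fst Y1) (fst Y2)) as [Lt|Ge].
      - rewrite Rmin_left, Rmax_right in Hx by lra. split.
        + apply Rmult_le_pos; [lra| apply Rlt_le, Rinv_0_lt_compat; lra].
        + apply (Rmult_le_reg_r (fst Y2 - fst Y1)); [lra|]. unfold Rdiv. rewrite Rmult_assoc, Rinv_l by lra. lra.
      - rewrite Rmin_right, Rmax_left in Hx by lra.
        replace ((x - fst Y1) / (fst Y2 - fst Y1)) with ((fst Y1 - x) / (fst Y1 - fst Y2)) by (field; lra). split.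
        + apply Rmult_le_pos; [lra| apply Rlt_le, Rinv_0_lt_compat; lra].
        + apply (Rmult_le_reg_r (fst Y1 - fst Y2)); [lra|]. unfold Rdiv. rewrite Rmult_assoc, Rinv_l by lra. lra. }
    exists (segp Y1 Y2 l). destruct (segp_ok H Y1 Y2 X d l H1 H2 D1 D2 Hl) as [A B]. split; [exact A|]. split; [exact B|].
    unfold segp, l; simpl. field. lra.
Qed.

Lemma seg_snd H Y1 Y2 X d x : in_poly H Y1 -> in_poly H Y2 -> dist2 Y1 X < d -> dist2 Y2 X < d ->
  Rmin (snd Y1) (snd Y2) <= x <= Rmax (snd Y1) (snd Y2) ->
  exists u, in_poly H u /\ dist2 u X < d /\ snd u = x.
Proof.
  intros H1 H2 D1 D2 Hx. destruct (Req_dec (snd Y1) (snd Y2)) as [E|N].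
  - exists Y1. split; [exact H1|]. split; [exact D1|].
    rewrite E, Rmin_left, Rmax_left in Hx by lra. lra.
  - set (l := (x - snd Y1) / (snd Y2 - snd Y1)).
    assert (Hl : 0 <= l <= 1).
    { unfold l. destruct (Rlt_or_le (snd Y1) (snd Y2)) as [Lt|Ge].
      - rewrite Rmin_left, Rmax_right in Hx by lra. split.
        + apply Rmult_le_pos; [lra| apply Rlt_le, Rinv_0_lt_compat; lra].
        + apply (Rmult_le_reg_r (snd Y2 - snd Y1)); [lra|]. unfold Rdiv. rewrite Rmult_assoc, Rinv_l by lra. lra.
      - rewrite Rmin_right, Rmax_left in Hx by lra.
        replace ((x - snd Y1) / (snd Y2 - snd Y1)) with ((snd Y1 - x) / (snd Y1 - snd Y2)) by (field; lra). split.
        + apply Rmult_le_pos; [lra| apply Rlt_le, Rinv_0_lt_compat; lra].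
        + apply (Rmult_le_reg_r (snd Y1 - snd Y2)); [lra|]. unfold Rdiv. rewrite Rmult_assoc, Rinv_l by lra. lra. }
    exists (segp Y1 Y2 l). destruct (segp_ok H Y1 Y2 X d l H1 H2 D1 D2 Hl) as [A B]. split; [exact A|]. split; [exact B|].
    unfold segp, l; simpl. field. lra.
Qed.

Lemma pair_lemma D H (HC : CoreHyp D H) X r c' : in_poly H X -> 0 < Qf D X r ->
  exists d, 0 < d /\ forall Y1 Y2, in_poly H Y1 -> in_poly H Y2 -> dist2 Y1 X < d -> dist2 Y2 X < d ->
    fst Y1 < fst Y2 ->
    ((snd Y2 - snd Y1) + r * (fst Y2 - fst Y1)) * (G1 D Y2 - G1 D Y1) <= 0 ->
    Lp D c' r Y1 < Lp D c' r Y2.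
Proof.
  intros HX HQ. destruct (ch_pos D H HC X HX) as [Hp1 [Hp2 Hp3]].
  destruct (pair_alg (mA0 D X) (mA1 D X) (mB0 D X) (mB1 D X) r Hp2 Hp3 HQ) as [e [He Halg]].
  destruct (ch_cont D H HC X HX e He) as [d [Hd Hc]].
  exists d. split; [exact Hd|]. intros Y1 Y2 H1 H2 D1 D2 Hlt Hcon.
  destruct (mvt_gen (g0 D) (a0 D) (fst Y1) (fst Y2) (ch_dg0 D H HC)) as [x0 [Hx0 E0]].
  destruct (mvt_gen (g1 D) (a1 D) (fst Y1) (fst Y2) (ch_dg1 D H HC)) as [x1 [Hx1 E1]].
  destruct (mvt_gen (h0 D) (b0 D) (snd Y1) (snd Y2) (ch_dh0 D H HC)) as [y0 [Hy0 F0]].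
  destruct (mvt_gen (h1 D) (b1 D) (snd Y1) (snd Y2) (ch_dh1 D H HC)) as [y1 [Hy1 F1]].
  destruct (seg_fst H Y1 Y2 X d x0 H1 H2 D1 D2 Hx0) as [u0 [Hu0 [Du0 Eu0]]].
  destruct (seg_fst H Y1 Y2 X d x1 H1 H2 D1 D2 Hx1) as [u1 [Hu1 [Du1 Eu1]]].
  destruct (seg_snd H Y1 Y2 X d y0 H1 H2 D1 D2 Hy0) as [v0 [Hv0 [Dv0 Ev0]]].
  destruct (seg_snd H Y1 Y2 X d y1 H1 H2 D1 D2 Hy1) as [v1 [Hv1 [Dv1 Ev1]]].
  destruct (Hc u0 Hu0 Du0) as [C0 _]. destruct (Hc u1 Hu1 Du1) as [_ [C1 _]].
  destruct (Hc v0 Hv0 Dv0) as [_ [_ [C2 _]]]. destruct (Hc v1 Hv1 Dv1) as [_ [_ [_ C3]]].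
  unfold mA0, mA1, mB0, mB1 in C0, C1, C2, C3. rewrite Eu0 in C0. rewrite Eu1 in C1. rewrite Ev0 in C2. rewrite Ev1 in C3.
  assert (HG1 : G1 D Y2 - G1 D Y1 = a1 D x1 * (fst Y2 - fst Y1) + b1 D y1 * (snd Y2 - snd Y1)).
  { unfold G1. rewrite <- E1, <- F1. ring. }
  assert (HG0 : G0 D Y2 - G0 D Y1 = a0 D x0 * (fst Y2 - fst Y1) + b0 D y0 * (snd Y2 - snd Y1)).
  { unfold G0. rewrite <- E0, <- F0. ring. }
  rewrite HG1 in Hcon.
  specialize (Halg (a0 D x0) (a1 D x1) (b0 D y0) (b1 D y1) (fst Y2 - fst Y1) (snd Y2 - snd Y1) C0 C1 C2 C3 ltac:(lra) Hcon).
  unfold Lp. 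
  assert (G0 D Y2 - r * (G1 D Y2 - c') - (G0 D Y1 - r * (G1 D Y1 - c')) = (G0 D Y2 - G0 D Y1) - r * (G1 D Y2 - G1 D Y1)) by ring.
  rewrite HG0, HG1 in H0. lra.
Qed.

Lemma cont_induction (a b : R) (Good : R -> Prop) : a < b ->
  (forall s, a <= s < b -> (s = a \/ Good s) -> exists d, 0 < d /\ forall x, s < x < s + d -> x <= b -> Good x) ->
  (forall s, a < s <= b -> (forall x, a < x < s -> Good x) -> Good s) -> Good b.
Proof.
  intros Hab RC LC.
  set (A := fun s => a <= s <= b /\ forall x, a < x <= s -> Good x).
  assert (HA : A a) by (split; [lra| intros; lra]).
  assert (Hb : bound A) by (exists b; intros s [Hs _]; lra).
  destruct (completeness A Hb (ex_intro _ a HA)) as [m [Hub Hlub]].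
  assert (Hma : a <= m) by (apply Hub; exact HA).
  assert (Hmb : m <= b) by (apply Hlub; intros s [Hs _]; lra).
  assert (Hlt : a < m).
  { destruct (RC a ltac:(lra) (or_introl eq_refl)) as [d [Hd Hg]].
    assert (A (a + Rmin d (b - a) / 2)).
    { assert (0 < Rmin d (b - a)) by (apply Rmin_glb_lt; lra).
      pose proof (Rmin_l d (b - a)). pose proof (Rmin_r d (b - a)).
      split; [lra|]. intros x Hx. apply Hg; lra. }
    apply Hub in H. assert (0 < Rmin d (b - a)) by (apply Rmin_glb_lt; lra). lra. }
  assert (Hbelow : forall x, a < x < m -> Good x).
  { intros x Hx. apply NNPP. intros Hn.
    assert (is_upper_bound A x).
    { intros s [Hs Hg]. destruct (Rle_or_lt s x) as [|Hl]; [assumption|]. exfalso. apply Hn. apply Hg. lra. }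
    apply Hlub in H. lra. }
  assert (Hm : Good m) by (apply LC; [lra| exact Hbelow]).
  destruct (Rle_lt_or_eq_dec m b Hmb) as [Hl|He]; [|subst; exact Hm].
  exfalso. destruct (RC m ltac:(lra) (or_intror Hm)) as [d [Hd Hg]].
  assert (0 < Rmin d (b - m)) by (apply Rmin_glb_lt; lra).
  pose proof (Rmin_l d (b - m)). pose proof (Rmin_r d (b - m)).
  assert (A (m + Rmin d (b - m) / 2)).
  { split; [lra|]. intros x Hx. destruct (Rlt_or_le x m) as [Hx1|Hx1].
    - apply Hbelow; lra.
    - destruct (Req_dec x m) as [->|Hne]; [exact Hm|]. apply Hg; lra. }
  apply Hub in H2. lra.
Qed.

Definition Route D H c' s t := in_poly H (s,t) /\
  (G1 D (s,t) = c' \/ (G1 D (s,t) < c' /\ IsHi H s t) \/ (c' < G1 D (s,t) /\ IsLo H s t)).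

Lemma G1_mono D H (HC : CoreHyp D H) s t1 t2 : t1 <= t2 -> G1 D (s,t1) <= G1 D (s,t2).
Proof. intros. unfold G1; simpl. pose proof (ch_mh1 D H HC t1 t2 H0). lra. Qed.

Lemma G1_strict D H (HC : CoreHyp D H) s t1 t2 : in_poly H (s,t1) -> in_poly H (s,t2) -> t1 < t2 ->
  G1 D (s,t1) < G1 D (s,t2).
Proof.
  intros H1 H2 Ht. destruct (mvt_gen (h1 D) (b1 D) t1 t2 (ch_dh1 D H HC)) as [c [Hc E]].
  rewrite Rmin_left, Rmax_right in Hc by lra.
  assert (in_poly H (s,c)) by (apply (slice_convex H s t1 t2); auto).
  destruct (ch_pos D H HC (s,c) H0) as [_ [Hb _]]. unfold mB1 in Hb; simpl in Hb.
  unfold G1; simpl. assert (0 < b1 D c * (t2 - t1)) by (apply Rmult_lt_0_compat; lra). lra.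
Qed.

Lemma hi_unique H s t1 t2 : IsHi H s t1 -> IsHi H s t2 -> t1 = t2.
Proof. intros [A1 B1'] [A2 B2']. apply B1' in A2. apply B2' in A1. lra. Qed.
Lemma lo_unique H s t1 t2 : IsLo H s t1 -> IsLo H s t2 -> t1 = t2.
Proof. intros [A1 B1'] [A2 B2']. apply B1' in A2. apply B2' in A1. lra. Qed.

Lemma route_unique D H (HC : CoreHyp D H) c' s t1 t2 : Route D H c' s t1 -> Route D H c' s t2 -> t1 = t2.
Proof.
  intros [P1 R1] [P2 R2].
  assert (Hgen : forall u v, in_poly H (s,u) -> in_poly H (s,v) -> G1 D (s,u) = G1 D (s,v) -> u = v).
  { intros u v Hu Hv E. destruct (Rtotal_order u v) as [L|[L|L]]; auto.
    - pose proof (G1_strict D H HC s u v Hu Hv L). lra.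
    - pose proof (G1_strict D H HC s v u Hv Hu L). lra. }
  destruct R1 as [E1|[[L1 I1]|[L1 I1]]]; destruct R2 as [E2|[[L2 I2]|[L2 I2]]].
  - apply Hgen; auto; congruence.
  - destruct I2 as [_ M]. specialize (M t1 P1). destruct (Rle_lt_or_eq_dec _ _ M); [|auto].
    pose proof (G1_strict D H HC s t1 t2 P1 P2 r). lra.
  - destruct I2 as [_ M]. specialize (M t1 P1). destruct (Rle_lt_or_eq_dec _ _ M); [|auto].
    pose proof (G1_strict D H HC s t2 t1 P2 P1 r). lra.
  - destruct I1 as [_ M]. specialize (M t2 P2). destruct (Rle_lt_or_eq_dec _ _ M); [|auto].
    pose proof (G1_strict D H HC s t2 t1 P2 P1 r). lra.
  - apply (hi_unique H s); auto.
  - destruct I1 as [_ M]. specialize (M t2 P2). destruct (Rle_lt_or_eq_dec _ _ M); [|auto].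
    pose proof (G1_strict D H HC s t2 t1 P2 P1 r). lra.
  - destruct I1 as [_ M]. specialize (M t2 P2). destruct (Rle_lt_or_eq_dec _ _ M); [|auto].
    pose proof (G1_strict D H HC s t1 t2 P1 P2 r). lra.
  - destruct I1 as [_ M]. specialize (M t2 P2). destruct (Rle_lt_or_eq_dec _ _ M); [|auto].
    pose proof (G1_strict D H HC s t1 t2 P1 P2 r). lra.
  - apply (lo_unique H s); auto.
Qed.

Lemma route_exists D H (HC : CoreHyp D H) c' s t0 : in_poly H (s,t0) -> exists t, Route D H c' s t.
Proof.
  intros H0. destruct (hi_exists H s t0 (ch_bnd D H HC) H0) as [th Hh].
  destruct (lo_exists H s t0 (ch_bnd D H HC) H0) as [tl Hl].
  destruct (Rlt_or_le (G1 D (s,th)) c') as [Lh|Lh].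
  { exists th. split; [apply Hh|]. right; left; auto. }
  destruct (Rlt_or_le c' (G1 D (s,tl))) as [Ll|Ll].
  { exists tl. split; [apply Hl|]. right; right; auto. }
  assert (Hlh : tl <= th) by (destruct Hl as [A _]; apply Hh; exact A).
  assert (Hc : continuity (fun t => G1 D (s,t) - c')).
  { unfold G1; simpl. apply continuity_minus; [|apply continuity_const; intros ? ?; reflexivity].
    apply continuity_plus; [apply continuity_const; intros ? ?; reflexivity|].
    apply (der_continuity _ _ (ch_dh1 D H HC)). }
  destruct (IVT_cor _ tl th Hc Hlh) as [t [Ht E]].
  { assert (0 <= G1 D (s,th) - c') by lra. assert (G1 D (s,tl) - c' <= 0) by lra. nra. }
  exists t. split.
  - apply (slice_convex H s tl th); [apply Hl|apply Hh|exact Ht].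
  - left. lra.
Qed.

Lemma lin_cont a b s : forall e, 0 < e -> exists d, 0 < d /\ forall x, Rabs (x - s) < d -> Rabs (lin a b x - lin a b s) < e.
Proof.
  intros e He. destruct (Req_dec (snd a) 0) as [Z|NZ].
  - exists 1. split; [lra|]. intros x _. unfold lin. rewrite Z. unfold Rdiv. rewrite Rinv_0, !Rmult_0_r.
    rewrite Rminus_diag, Rabs_R0. lra.
  - set (k := fst a / snd a). exists (e / (Rabs k + 1)). split.
    { apply Rdiv_lt_0_compat; [lra| pose proof (Rabs_pos k); lra]. }
    intros x Hx. rewrite (lin_affine a b s x NZ). fold k.
    replace (lin a b s - k * (x - s) - lin a b s) with (- (k * (x - s))) by ring.
    rewrite Rabs_Ropp, Rabs_mult. pose proof (Rabs_pos k). pose proof (Rabs_pos (x - s)).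
    apply Rle_lt_trans with ((Rabs k + 1) * Rabs (x - s)). nra.
    apply Rlt_le_trans with ((Rabs k + 1) * (e / (Rabs k + 1))). apply Rmult_lt_compat_l; lra.
    right; field; lra.
Qed.

Lemma route_cont D H (HC : CoreHyp D H) c' (N : R -> Prop) s t (l lam : R -> R) :
  N s -> (forall x, N x -> IsHi H x (l x) /\ IsLo H x (lam x)) ->
  (forall e, 0 < e -> exists d, 0 < d /\ forall x, N x -> Rabs (x - s) < d -> Rabs (l x - l s) < e /\ Rabs (lam x - lam s) < e) ->
  Route D H c' s t ->
  forall e, 0 < e -> exists d, 0 < d /\ forall x t', N x -> Rabs (x - s) < d -> Route D H c' x t' -> Rabs (t' - t) < e.
Proof.
  intros Ns Hedge Hlc Rt e He.
  set (e' := e / 2). assert (He' : 0 < e') by (unfold e'; lra).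
  destruct (Hedge s Ns) as [[Ihs Mhs] [Ils Mls]].
  destruct Rt as [Pt Tt].
  assert (Hlt : lam s <= t <= l s) by (split; [apply Mls| apply Mhs]; exact Pt).
  assert (g1c := der_cont (g1 D) s (a1 D s) (ch_dg1 D H HC s)).
  assert (Up : exists d, 0 < d /\ forall x t', N x -> Rabs (x - s) < d -> Route D H c' x t' -> t' < t + e).
  { destruct (Rlt_or_le (l s) (t + e')) as [CA|CB].
    - destruct (Hlc (t + e' - l s) ltac:(lra)) as [d [Hd Hd']]. exists d. split; [exact Hd|].
      intros x t' Nx Hx [Pt' _]. destruct (Hd' x Nx Hx) as [K _]. apply Rabs_def2 in K.
      destruct (Hedge x Nx) as [[_ Mh] _]. specialize (Mh t' Pt'). unfold e' in *. lra.
    - assert (HG : c' <= G1 D (s,t)).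
      { destruct Tt as [E|[[L I]|[L I]]]; [lra| |lra].
        pose proof (hi_unique H s t (l s) I (conj Ihs Mhs)). unfold e' in *. lra. }
      assert (Pte : in_poly H (s, t + e')) by (apply (slice_convex H s t (l s)); auto; lra).
      pose proof (G1_strict D H HC s t (t + e') Pt Pte ltac:(lra)) as Hs.
      destruct (g1c (G1 D (s, t+e') - c') ltac:(lra)) as [d1 [Hd1 Hg1]].
      destruct (Hlc (t + e' - lam s) ltac:(lra)) as [d2 [Hd2 Hl2]].
      exists (Rmin d1 d2). split; [apply Rmin_glb_lt; lra|].
      intros x t' Nx Hx Rt'. 
      assert (Hx1 : Rabs (x - s) < d1) by (eapply Rlt_le_trans; [exact Hx| apply Rmin_l]).
      assert (Hx2 : Rabs (x - s) < d2) by (eapply Rlt_le_trans; [exact Hx| apply Rmin_r]).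
      destruct (Rlt_or_le t' (t + e')) as [Lt|Ge]; [unfold e' in *; lra|].
      specialize (Hg1 x Hx1). apply Rabs_def2 in Hg1.
      destruct (Hl2 x Nx Hx2) as [_ Kl]. apply Rabs_def2 in Kl.
      assert (HGx : c' < G1 D (x, t + e')) by (unfold G1 in *; simpl in *; lra).
      pose proof (G1_mono D H HC x (t+e') t' Ge) as Hm.
      destruct Rt' as [Pt' Tt'].
      destruct Tt' as [E|[[L I]|[L I]]]; [lra|lra|].
      destruct (Hedge x Nx) as [[_ Mh] [Il _]].
      assert (in_poly H (x, t + e')) by (apply (slice_convex H x (lam x) t'); auto; split; [lra|exact Ge]).
      destruct I as [_ Mi]. specialize (Mi _ H0). unfold e' in *. lra. }
  assert (Lo : exists d, 0 < d /\ forall x t', N x -> Rabs (x - s) < d -> Route D H c' x t' -> t - e < t').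
  { destruct (Rlt_or_le (t - e') (lam s)) as [CA|CB].
    - destruct (Hlc (lam s - (t - e')) ltac:(lra)) as [d [Hd Hd']]. exists d. split; [exact Hd|].
      intros x t' Nx Hx [Pt' _]. destruct (Hd' x Nx Hx) as [_ K]. apply Rabs_def2 in K.
      destruct (Hedge x Nx) as [_ [_ Ml]]. specialize (Ml t' Pt'). unfold e' in *. lra.
    - assert (HG : G1 D (s,t) <= c').
      { destruct Tt as [E|[[L I]|[L I]]]; [lra|lra|].
        pose proof (lo_unique H s t (lam s) I (conj Ils Mls)). unfold e' in *. lra. }
      assert (Pte : in_poly H (s, t - e')) by (apply (slice_convex H s (lam s) t); auto; lra).
      pose proof (G1_strict D H HC s (t - e') t Pte Pt ltac:(lra)) as Hs.
      destruct (g1c (c' - G1 D (s, t-e')) ltac:(lra)) as [d1 [Hd1 Hg1]].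
      destruct (Hlc (l s - (t - e')) ltac:(lra)) as [d2 [Hd2 Hl2]].
      exists (Rmin d1 d2). split; [apply Rmin_glb_lt; lra|].
      intros x t' Nx Hx Rt'. 
      assert (Hx1 : Rabs (x - s) < d1) by (eapply Rlt_le_trans; [exact Hx| apply Rmin_l]).
      assert (Hx2 : Rabs (x - s) < d2) by (eapply Rlt_le_trans; [exact Hx| apply Rmin_r]).
      destruct (Rlt_or_le (t - e') t') as [Lt|Ge]; [unfold e' in *; lra|].
      specialize (Hg1 x Hx1). apply Rabs_def2 in Hg1.
      destruct (Hl2 x Nx Hx2) as [Kl _]. apply Rabs_def2 in Kl.
      assert (HGx : G1 D (x, t - e') < c') by (unfold G1 in *; simpl in *; lra).
      pose proof (G1_mono D H HC x t' (t-e') Ge) as Hm.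
      destruct Rt' as [Pt' Tt'].
      destruct Tt' as [E|[[L I]|[L I]]]; [lra| |lra].
      destruct (Hedge x Nx) as [[Ih _] _].
      assert (in_poly H (x, t - e')) by (apply (slice_convex H x t' (l x)); auto; split; [exact Ge|lra]).
      destruct I as [_ Mi]. specialize (Mi _ H0). unfold e' in *. lra. }
  destruct Up as [d1 [Hd1 U]]. destruct Lo as [d2 [Hd2 L]].
  exists (Rmin d1 d2). split; [apply Rmin_glb_lt; lra|].
  intros x t' Nx Hx Rt'.
  specialize (U x t' Nx (Rlt_le_trans _ _ _ Hx (Rmin_l _ _)) Rt').
  specialize (L x t' Nx (Rlt_le_trans _ _ _ Hx (Rmin_r _ _)) Rt').
  apply Rabs_def1; lra.
Qed.

Definition Vset D H c' s t r :=
  (G1 D (s,t) < c' -> forall u, in_poly H u -> snd u + r * fst u <= t + r * s) /\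
  (c' < G1 D (s,t) -> forall u, in_poly H u -> t + r * s <= snd u + r * fst u).

Definition RCont D H c' (N : R -> Prop) s t :=
  forall e, 0 < e -> exists d, 0 < d /\ forall x t', N x -> Rabs (x - s) < d -> Route D H c' x t' -> Rabs (t' - t) < e.

Lemma ev_G1 D H (HC : CoreHyp D H) c' N s t : RCont D H c' N s t ->
  forall e, 0 < e -> exists d, 0 < d /\ forall x t', N x -> Rabs (x - s) < d -> Route D H c' x t' ->
    Rabs (G1 D (x,t') - G1 D (s,t)) < e.
Proof.
  intros Rc e He.
  destruct (der_cont (g1 D) s (a1 D s) (ch_dg1 D H HC s) (e/2) ltac:(lra)) as [d1 [Hd1 K1]].
  destruct (der_cont (h1 D) t (b1 D t) (ch_dh1 D H HC t) (e/2) ltac:(lra)) as [d2 [Hd2 K2]].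
  destruct (Rc d2 Hd2) as [d3 [Hd3 K3]].
  exists (Rmin d1 d3). split; [apply Rmin_glb_lt; lra|].
  intros x t' Nx Hx Rt.
  specialize (K1 x (Rlt_le_trans _ _ _ Hx (Rmin_l _ _))).
  specialize (K3 x t' Nx (Rlt_le_trans _ _ _ Hx (Rmin_r _ _)) Rt). specialize (K2 t' K3).
  unfold G1; simpl. apply Rabs_def2 in K1. apply Rabs_def2 in K2. apply Rabs_def1; lra.
Qed.

Lemma ev_below D H c' N s t (l : R -> R) : RCont D H c' N s t ->
  (forall e, 0 < e -> exists d, 0 < d /\ forall x, Rabs (x - s) < d -> Rabs (l x - l s) < e) ->
  exists d, 0 < d /\ (t < l s -> forall x t', N x -> Rabs (x - s) < d -> Route D H c' x t' -> t' < l x).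
Proof.
  intros Rc Lc. destruct (Rlt_or_le t (l s)) as [Lt|Ge].
  - destruct (Rc ((l s - t)/2) ltac:(lra)) as [d1 [Hd1 K1]].
    destruct (Lc ((l s - t)/2) ltac:(lra)) as [d2 [Hd2 K2]].
    exists (Rmin d1 d2). split; [apply Rmin_glb_lt; lra|].
    intros _ x t' Nx Hx Rt.
    specialize (K1 x t' Nx (Rlt_le_trans _ _ _ Hx (Rmin_l _ _)) Rt). specialize (K2 x (Rlt_le_trans _ _ _ Hx (Rmin_r _ _))).
    apply Rabs_def2 in K1. apply Rabs_def2 in K2. lra.
  - exists 1. split; [lra|]. intros; lra.
Qed.

Lemma ev_above D H c' N s t (l : R -> R) : RCont D H c' N s t ->
  (forall e, 0 < e -> exists d, 0 < d /\ forall x, Rabs (x - s) < d -> Rabs (l x - l s) < e) ->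
  exists d, 0 < d /\ (l s < t -> forall x t', N x -> Rabs (x - s) < d -> Route D H c' x t' -> l x < t').
Proof.
  intros Rc Lc. destruct (Rlt_or_le (l s) t) as [Lt|Ge].
  - destruct (Rc ((t - l s)/2) ltac:(lra)) as [d1 [Hd1 K1]].
    destruct (Lc ((t - l s)/2) ltac:(lra)) as [d2 [Hd2 K2]].
    exists (Rmin d1 d2). split; [apply Rmin_glb_lt; lra|].
    intros _ x t' Nx Hx Rt.
    specialize (K1 x t' Nx (Rlt_le_trans _ _ _ Hx (Rmin_l _ _)) Rt). specialize (K2 x (Rlt_le_trans _ _ _ Hx (Rmin_r _ _))).
    apply Rabs_def2 in K1. apply Rabs_def2 in K2. lra.
  - exists 1. split; [lra|]. intros; lra.
Qed.

Lemma ev_G1lt D H (HC : CoreHyp D H) c' N s t : RCont D H c' N s t ->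
  exists d, 0 < d /\ (G1 D (s,t) < c' -> forall x t', N x -> Rabs (x - s) < d -> Route D H c' x t' -> G1 D (x,t') < c').
Proof.
  intros Rc. destruct (Rlt_or_le (G1 D (s,t)) c') as [Lt|Ge].
  - destruct (ev_G1 D H HC c' N s t Rc (c' - G1 D (s,t)) ltac:(lra)) as [d [Hd K]].
    exists d. split; [exact Hd|]. intros _ x t' Nx Hx Rt. specialize (K x t' Nx Hx Rt). apply Rabs_def2 in K. lra.
  - exists 1. split; [lra|]. intros; lra.
Qed.

Lemma ev_G1gt D H (HC : CoreHyp D H) c' N s t : RCont D H c' N s t ->
  exists d, 0 < d /\ (c' < G1 D (s,t) -> forall x t', N x -> Rabs (x - s) < d -> Route D H c' x t' -> c' < G1 D (x,t')).
Proof.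
  intros Rc. destruct (Rlt_or_le c' (G1 D (s,t))) as [Lt|Ge].
  - destruct (ev_G1 D H HC c' N s t Rc (G1 D (s,t) - c') ltac:(lra)) as [d [Hd K]].
    exists d. split; [exact Hd|]. intros _ x t' Nx Hx Rt. specialize (K x t' Nx Hx Rt). apply Rabs_def2 in K. lra.
  - exists 1. split; [lra|]. intros; lra.
Qed.

Lemma vset_up H a b s t : In (a,b) H -> 0 < snd a -> t = lin a b s ->
  forall u, in_poly H u -> snd u + (fst a / snd a) * fst u <= t + (fst a / snd a) * s.
Proof.
  intros Hh Ha Et u Hu. specialize (Hu _ Hh). simpl in Hu. unfold dot in Hu. subst t. unfold lin.
  apply (Rmult_le_reg_l (snd a)); [lra|]. field_simplify; [|lra|lra]. lra.
Qed.

Lemma vset_lo H a b s t : In (a,b) H -> snd a < 0 -> t = lin a b s ->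
  forall u, in_poly H u -> t + (fst a / snd a) * s <= snd u + (fst a / snd a) * fst u.
Proof.
  intros Hh Ha Et u Hu. specialize (Hu _ Hh). simpl in Hu. unfold dot in Hu. subst t. unfold lin.
  apply (Rmult_le_reg_l (- snd a)); [lra|].
  replace (- snd a * ((b - fst a * s) / snd a + fst a / snd a * s)) with (- b) by (field; lra).
  replace (- snd a * (snd u + fst a / snd a * fst u)) with (- (fst a * fst u + snd a * snd u)) by (field; lra).
  lra.
Qed.

Lemma edgeQ D H (HC : CoreHyp D H) a b s1 s2 s : In (a,b) H -> snd a <> 0 -> s1 <> s2 ->
  in_poly H (s1, lin a b s1) -> in_poly H (s2, lin a b s2) -> in_poly H (s, lin a b s) ->
  0 < Qf D (s, lin a b s) (fst a / snd a).
Proof.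
  intros Hh Ha Hs H1 H2 H3. apply (ch_edge D H HC a b Hh Ha (s1, lin a b s1) (s2, lin a b s2)); auto.
  - apply lin_on; auto.
  - apply lin_on; auto.
  - intros E. inversion E. auto.
  - apply lin_on; auto.
Qed.

Lemma Qkappa D H (HC : CoreHyp D H) X : in_poly H X -> 0 < Qf D X (mA1 D X / mB1 D X).
Proof.
  intros HX. destruct (ch_pos D H HC X HX) as [P1 [P2 P3]]. unfold detD in P3. unfold Qf.
  replace (mA0 D X - mA1 D X / mB1 D X * mA1 D X - mA1 D X / mB1 D X * mB0 D X + mA1 D X / mB1 D X * (mA1 D X / mB1 D X) * mB1 D X)
    with ((mA0 D X * mB1 D X - mB0 D X * mA1 D X) / mB1 D X) by (field; lra).
  apply Rdiv_lt_0_compat; lra.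
Qed.

Lemma Lp_C D c' r1 r2 u : G1 D u = c' -> Lp D c' r1 u = Lp D c' r2 u.
Proof. intros E. unfold Lp. rewrite E. ring. Qed.

Lemma pair_cond D H (HC : CoreHyp D H) X r c' (Cnd : Prop) : in_poly H X -> (Cnd -> 0 < Qf D X r) ->
  exists d, 0 < d /\ (Cnd -> forall Y1 Y2, in_poly H Y1 -> in_poly H Y2 -> dist2 Y1 X < d -> dist2 Y2 X < d ->
    fst Y1 < fst Y2 ->
    ((snd Y2 - snd Y1) + r * (fst Y2 - fst Y1)) * (G1 D Y2 - G1 D Y1) <= 0 ->
    Lp D c' r Y1 < Lp D c' r Y2).
Proof.
  intros HX HQ. destruct (classic Cnd) as [C|NC].
  - destruct (pair_lemma D H HC X r c' HX (HQ C)) as [d [Hd K]]. exists d. split; [exact Hd|]. intros _. exact K.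
  - exists 1. split; [lra|]. intros C; contradiction.
Qed.

Lemma dist2_self u d : 0 < d -> dist2 u u < d.
Proof. intros. apply dist2_lt. rewrite !Rminus_diag, Rabs_R0. auto. Qed.

Lemma lt_min3 a b c : 0 < a -> 0 < b -> 0 < c -> 0 < Rmin a (Rmin b c).
Proof. intros. repeat apply Rmin_glb_lt; auto. Qed.

Ltac minle := repeat (first [ apply Rmin_l | apply Rmin_r | eapply Rle_trans; [apply Rmin_r|] | eapply Rle_trans; [apply Rmin_l|] ]).

Lemma RC_core D H (HC : CoreHyp D H) c' x0 y0 s :
  (forall z, x0 <= z <= y0 -> exists t, in_poly H (z,t)) -> x0 <= s < y0 ->
  exists d, 0 < d /\ forall z t' r', s < z < s + d -> z <= y0 -> Route D H c' z t' -> Vset D H c' z t' r' ->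
    exists t r, Route D H c' s t /\ Vset D H c' s t r /\ Lp D c' r (s,t) < Lp D c' r' (z,t').
Proof.
  intros Hsl Hs.
  destruct (Hsl s ltac:(lra)) as [t0 Ht0]. destruct (route_exists D H HC c' s t0 Ht0) as [t Rt].
  assert (Hsl' : forall z, s <= z <= s + (y0 - s) -> exists t, in_poly H (z,t)) by (intros z Hz; apply Hsl; lra).
  destruct (upper_right_edge H s (y0 - s) (ch_bnd D H HC) ltac:(lra) Hsl') as [du [a [b [Hdu [Hdu' [Hab [Ha Eu]]]]]]].
  destruct (lower_right_edge H s (y0 - s) (ch_bnd D H HC) ltac:(lra) Hsl') as [dl [a' [b' [Hdl [Hdl' [Hab' [Ha' El]]]]]]].
  set (de := Rmin du dl). assert (Hde : 0 < de) by (apply Rmin_glb_lt; lra).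
  set (N := fun z => s <= z <= s + de).
  assert (Hedge : forall z, N z -> IsHi H z (lin a b z) /\ IsLo H z (lin a' b' z)).
  { intros z [Hz1 Hz2]. split; [apply Eu| apply El]; split; try lra.
    - pose proof (Rmin_l du dl). fold de in H0. lra.
    - pose proof (Rmin_r du dl). fold de in H0. lra. }
  assert (Rc : RCont D H c' N s t).
  { intros e He. apply (route_cont D H HC c' N s t (lin a b) (lin a' b')); auto.
    - unfold N; lra.
    - intros e' He'. destruct (lin_cont a b s e' He') as [d1 [Hd1 K1]]. destruct (lin_cont a' b' s e' He') as [d2 [Hd2 K2]].
      exists (Rmin d1 d2). split; [apply Rmin_glb_lt; lra|]. intros z _ Hz. split.
      apply K1. eapply Rlt_le_trans; [exact Hz| apply Rmin_l]. apply K2. eapply Rlt_le_trans; [exact Hz| apply Rmin_r]. }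
  set (l := lin a b). set (lm := lin a' b'). set (r := fst a / snd a). set (rh := fst a' / snd a').
  destruct Rt as [HX TX]. set (X := (s,t)).
  assert (QU : t = l s -> 0 < Qf D X r).
  { intros E. unfold X. rewrite E. unfold l, r. apply (edgeQ D H HC a b s (s + de) s Hab ltac:(lra) ltac:(lra)).
    apply (Hedge s). unfold N; lra. apply (Hedge (s + de)). unfold N; lra. apply (Hedge s). unfold N; lra. }
  assert (QL : t = lm s -> 0 < Qf D X rh).
  { intros E. unfold X. rewrite E. unfold lm, rh. apply (edgeQ D H HC a' b' s (s + de) s Hab' ltac:(lra) ltac:(lra)).
    apply (Hedge s). unfold N; lra. apply (Hedge (s + de)). unfold N; lra. apply (Hedge s). unfold N; lra. }
  destruct (pair_cond D H HC X r c' (t = l s) HX QU) as [pu [Hpu PU]].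
  destruct (pair_cond D H HC X rh c' (t = lm s) HX QL) as [pl [Hpl PL]].
  destruct (pair_cond D H HC X (mA1 D X / mB1 D X) c' True HX (fun _ => Qkappa D H HC X HX)) as [pk [Hpk PK]].
  set (dp := Rmin pu (Rmin pl pk)). assert (Hdp : 0 < dp) by (apply lt_min3; auto).
  destruct (Rc dp Hdp) as [dc [Hdc Kc]].
  assert (Lcl : forall e, 0 < e -> exists d, 0 < d /\ forall z, Rabs (z - s) < d -> Rabs (l z - l s) < e) by (apply lin_cont).
  assert (Lcm : forall e, 0 < e -> exists d, 0 < d /\ forall z, Rabs (z - s) < d -> Rabs (lm z - lm s) < e) by (apply lin_cont).
  destruct (ev_below D H c' N s t l Rc Lcl) as [db [Hdb Kb]].
  destruct (ev_above D H c' N s t lm Rc Lcm) as [da [Hda Ka]].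
  destruct (ev_G1lt D H HC c' N s t Rc) as [dg1 [Hdg1 Kg1]].
  destruct (ev_G1gt D H HC c' N s t Rc) as [dg2 [Hdg2 Kg2]].
  set (d := Rmin de (Rmin dp (Rmin dc (Rmin db (Rmin da (Rmin dg1 dg2)))))).
  assert (Hd : 0 < d) by (repeat apply Rmin_glb_lt; auto).
  exists d. split; [exact Hd|].
  intros z t' r' Hz Hzy Rt' Vt'.
  assert (Hzs : Rabs (z - s) < d) by (rewrite Rabs_right; lra).
  assert (Nz : N z) by (unfold N; split; [lra|]; assert (d <= de) by apply Rmin_l; lra).
  assert (Z1 : Rabs (z - s) < dp) by (eapply Rlt_le_trans; [exact Hzs|]; unfold d; minle).
  assert (Z2 : Rabs (z - s) < dc) by (eapply Rlt_le_trans; [exact Hzs|]; unfold d; minle).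
  assert (Z3 : Rabs (z - s) < db) by (eapply Rlt_le_trans; [exact Hzs|]; unfold d; minle).
  assert (Z4 : Rabs (z - s) < da) by (eapply Rlt_le_trans; [exact Hzs|]; unfold d; minle).
  assert (Z5 : Rabs (z - s) < dg1) by (eapply Rlt_le_trans; [exact Hzs|]; unfold d; minle).
  assert (Z6 : Rabs (z - s) < dg2) by (eapply Rlt_le_trans; [exact Hzs|]; unfold d; minle).
  assert (Dz : dist2 (z,t') X < dp).
  { apply dist2_lt. simpl. split; [exact Z1| apply (Kc z t' Nz Z2 Rt')]. }
  assert (DX : dist2 X X < dp) by (apply dist2_self; exact Hdp).
  assert (Dpu : forall Y, dist2 Y X < dp -> dist2 Y X < pu) by (intros Y HY; eapply Rlt_le_trans; [exact HY| unfold dp; minle]).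
  assert (Dpl : forall Y, dist2 Y X < dp -> dist2 Y X < pl) by (intros Y HY; eapply Rlt_le_trans; [exact HY| unfold dp; minle]).
  assert (Dpk : forall Y, dist2 Y X < dp -> dist2 Y X < pk) by (intros Y HY; eapply Rlt_le_trans; [exact HY| unfold dp; minle]).
  destruct (Hedge s ltac:(unfold N; lra)) as [[Ihs Mhs] [Ils Mls]].
  destruct (Hedge z Nz) as [[Ihz Mhz] [Ilz Mlz]].
  pose proof Rt' as [Pz Tz].
  assert (tle : t <= l s) by (apply Mhs; exact HX). assert (tge : lm s <= t) by (apply Mls; exact HX).
  assert (t'le : t' <= l z) by (apply Mhz; exact Pz). assert (t'ge : lm z <= t') by (apply Mlz; exact Pz).
  assert (Elz : l z = l s - r * (z - s)) by (unfold l, r; apply lin_affine; lra).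
  assert (Elmz : lm z = lm s - rh * (z - s)) by (unfold lm, rh; apply lin_affine; lra).
  assert (RtX : Route D H c' s t) by (split; assumption).
  destruct (Rtotal_order (G1 D (z,t')) c') as [Gz|[Gz|Gz]].
  -
    destruct Tz as [E|[[_ Iz]|[L _]]]; [lra| |lra].
    assert (Et' : t' = l z) by (apply (hi_unique H z); [exact Iz| split; assumption]).
    assert (GX : G1 D X <= c').
    { destruct (Rle_or_lt (G1 D X) c') as [|GX]; [assumption|]. exfalso.
      specialize (Kg2 GX z t' Nz Z6 Rt'). lra. }
    assert (Et : t = l s).
    { destruct (Rle_lt_or_eq_dec _ _ tle) as [Lt|Eq]; [|exact Eq]. exfalso.
      specialize (Kb Lt z t' Nz Z3 Rt'). lra. }
    exists t, r. split; [exact RtX|]. split.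
    { split. intros _. apply (vset_up H a b s t Hab Ha Et). intros L. unfold X in GX. lra. }
    assert (rr' : r <= r').
    { destruct Vt' as [V1 _]. specialize (V1 Gz (s, l s) Ihs). simpl in V1. rewrite Et', Elz in V1.
      assert (r * (z - s) <= r' * (z - s)) by lra. apply (Rmult_le_reg_r (z - s)); lra. }
    assert (Lp D c' r (z,t') <= Lp D c' r' (z,t')) by (unfold Lp; nra).
    assert (Lp D c' r X < Lp D c' r (z,t')).
    { apply (PU Et X (z,t') HX Pz (Dpu _ DX) (Dpu _ Dz)); simpl; [lra|].
      rewrite Et', Et, Elz. replace (l s - r * (z - s) - l s + r * (z - s)) with 0 by ring. lra. }
    unfold X in *. lra.
  -
    destruct (Rtotal_order (G1 D X) c') as [GX|[GX|GX]].
    + assert (Et : t = l s).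
      { destruct TX as [E|[[_ I]|[L _]]]; [unfold X in GX; lra| |unfold X in GX; lra].
        apply (hi_unique H s); [exact I| split; assumption]. }
      exists t, r. split; [exact RtX|]. split.
      { split. intros _. apply (vset_up H a b s t Hab Ha Et). intros L. unfold X in GX. lra. }
      rewrite (Lp_C D c' r' r (z,t') Gz).
      apply (PU Et X (z,t') HX Pz (Dpu _ DX) (Dpu _ Dz)); simpl; [lra|].
      rewrite Gz. assert (t' - t + r * (z - s) <= 0) by (rewrite Et; lra).
      assert (0 <= c' - G1 D X) by lra. unfold X in *. nra.
    + exists t, (mA1 D X / mB1 D X). split; [exact RtX|]. split.
      { split; intros L; unfold X in GX; lra. }
      rewrite (Lp_C D c' r' (mA1 D X / mB1 D X) (z,t') Gz).
      apply (PK I X (z,t') HX Pz (Dpk _ DX) (Dpk _ Dz)); simpl; [lra|].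
      rewrite Gz, GX. lra.
    + assert (Et : t = lm s).
      { destruct TX as [E|[[L _]|[_ I]]]; [unfold X in GX; lra|unfold X in GX; lra|].
        apply (lo_unique H s); [exact I| split; assumption]. }
      exists t, rh. split; [exact RtX|]. split.
      { split. intros L. unfold X in GX. lra. intros _. apply (vset_lo H a' b' s t Hab' Ha' Et). }
      rewrite (Lp_C D c' r' rh (z,t') Gz).
      apply (PL Et X (z,t') HX Pz (Dpl _ DX) (Dpl _ Dz)); simpl; [lra|].
      rewrite Gz. assert (0 <= t' - t + rh * (z - s)) by (rewrite Et; lra).
      assert (c' - G1 D X <= 0) by lra. unfold X in *. nra.
  -
    destruct Tz as [E|[[L _]|[_ Iz]]]; [lra|lra|].
    assert (Et' : t' = lm z) by (apply (lo_unique H z); [exact Iz| split; assumption]).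
    assert (GX : c' <= G1 D X).
    { destruct (Rle_or_lt c' (G1 D X)) as [|GX]; [assumption|]. exfalso.
      specialize (Kg1 GX z t' Nz Z5 Rt'). lra. }
    assert (Et : t = lm s).
    { destruct (Rle_lt_or_eq_dec _ _ tge) as [Lt|Eq]; [|symmetry; exact Eq]. exfalso.
      specialize (Ka Lt z t' Nz Z4 Rt'). lra. }
    exists t, rh. split; [exact RtX|]. split.
    { split. intros L. unfold X in GX. lra. intros _. apply (vset_lo H a' b' s t Hab' Ha' Et). }
    assert (rr' : r' <= rh).
    { destruct Vt' as [_ V1]. specialize (V1 Gz (s, lm s) Ils). simpl in V1. rewrite Et', Elmz in V1.
      assert (r' * (z - s) <= rh * (z - s)) by lra. apply (Rmult_le_reg_r (z - s)); lra. }
    assert (Lp D c' rh (z,t') <= Lp D c' r' (z,t')) by (unfold Lp; nra).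
    assert (Lp D c' rh X < Lp D c' rh (z,t')).
    { apply (PL Et X (z,t') HX Pz (Dpl _ DX) (Dpl _ Dz)); simpl; [lra|].
      rewrite Et', Et, Elmz. replace (lm s - rh * (z - s) - lm s + rh * (z - s)) with 0 by ring. lra. }
    unfold X in *. lra.
Qed.

Lemma LC_core D H (HC : CoreHyp D H) c' x0 y0 s :
  (forall z, x0 <= z <= y0 -> exists t, in_poly H (z,t)) -> x0 < s <= y0 ->
  forall t r0, Route D H c' s t -> Vset D H c' s t r0 ->
  exists d, 0 < d /\ forall z, s - d < z < s -> x0 <= z ->
    exists t' r', Route D H c' z t' /\ Vset D H c' z t' r' /\ Lp D c' r' (z,t') < Lp D c' r0 (s,t).
Proof.
  intros Hsl Hs t r0 Rt Vt.
  assert (Hsl' : forall z, s - (s - x0) <= z <= s -> exists t, in_poly H (z,t)) by (intros z Hz; apply Hsl; lra).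
  destruct (upper_left_edge H s (s - x0) (ch_bnd D H HC) ltac:(lra) Hsl') as [du [a [b [Hdu [Hdu' [Hab [Ha Eu]]]]]]].
  destruct (lower_left_edge H s (s - x0) (ch_bnd D H HC) ltac:(lra) Hsl') as [dl [a' [b' [Hdl [Hdl' [Hab' [Ha' El]]]]]]].
  set (de := Rmin du dl). assert (Hde : 0 < de) by (apply Rmin_glb_lt; lra).
  set (N := fun z => s - de <= z <= s).
  assert (Hedge : forall z, N z -> IsHi H z (lin a b z) /\ IsLo H z (lin a' b' z)).
  { intros z [Hz1 Hz2]. split; [apply Eu| apply El]; split; try lra.
    - pose proof (Rmin_l du dl). fold de in H0. lra.
    - pose proof (Rmin_r du dl). fold de in H0. lra. }
  assert (Rc : RCont D H c' N s t).
  { intros e He. apply (route_cont D H HC c' N s t (lin a b) (lin a' b')); auto.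
    - unfold N; lra.
    - intros e' He'. destruct (lin_cont a b s e' He') as [d1 [Hd1 K1]]. destruct (lin_cont a' b' s e' He') as [d2 [Hd2 K2]].
      exists (Rmin d1 d2). split; [apply Rmin_glb_lt; lra|]. intros z _ Hz. split.
      apply K1. eapply Rlt_le_trans; [exact Hz| apply Rmin_l]. apply K2. eapply Rlt_le_trans; [exact Hz| apply Rmin_r]. }
  set (l := lin a b). set (lm := lin a' b'). set (r := fst a / snd a). set (rh := fst a' / snd a').
  pose proof Rt as [HX TX]. set (X := (s,t)).
  assert (QU : t = l s -> 0 < Qf D X r).
  { intros E. unfold X. rewrite E. unfold l, r. apply (edgeQ D H HC a b s (s - de) s Hab ltac:(lra) ltac:(lra)).
    apply (Hedge s). unfold N; lra. apply (Hedge (s - de)). unfold N; lra. apply (Hedge s). unfold N; lra. }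
  assert (QL : t = lm s -> 0 < Qf D X rh).
  { intros E. unfold X. rewrite E. unfold lm, rh. apply (edgeQ D H HC a' b' s (s - de) s Hab' ltac:(lra) ltac:(lra)).
    apply (Hedge s). unfold N; lra. apply (Hedge (s - de)). unfold N; lra. apply (Hedge s). unfold N; lra. }
  destruct (pair_cond D H HC X r c' (t = l s) HX QU) as [pu [Hpu PU]].
  destruct (pair_cond D H HC X rh c' (t = lm s) HX QL) as [pl [Hpl PL]].
  destruct (pair_cond D H HC X (mA1 D X / mB1 D X) c' True HX (fun _ => Qkappa D H HC X HX)) as [pk [Hpk PK]].
  set (dp := Rmin pu (Rmin pl pk)). assert (Hdp : 0 < dp) by (apply lt_min3; auto).
  destruct (Rc dp Hdp) as [dc [Hdc Kc]].
  assert (Lcl : forall e, 0 < e -> exists d, 0 < d /\ forall z, Rabs (z - s) < d -> Rabs (l z - l s) < e) by (apply lin_cont).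
  assert (Lcm : forall e, 0 < e -> exists d, 0 < d /\ forall z, Rabs (z - s) < d -> Rabs (lm z - lm s) < e) by (apply lin_cont).
  destruct (ev_below D H c' N s t l Rc Lcl) as [db [Hdb Kb]].
  destruct (ev_above D H c' N s t lm Rc Lcm) as [da [Hda Ka]].
  destruct (ev_G1lt D H HC c' N s t Rc) as [dg1 [Hdg1 Kg1]].
  destruct (ev_G1gt D H HC c' N s t Rc) as [dg2 [Hdg2 Kg2]].
  set (d := Rmin de (Rmin dp (Rmin dc (Rmin db (Rmin da (Rmin dg1 dg2)))))).
  assert (Hd : 0 < d) by (repeat apply Rmin_glb_lt; auto).
  exists d. split; [exact Hd|].
  intros z Hz Hzx.
  destruct (Hsl z ltac:(lra)) as [t0 Ht0]. destruct (route_exists D H HC c' z t0 Ht0) as [t' Rt'].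
  assert (Hzs : Rabs (z - s) < d) by (rewrite Rabs_left; lra).
  assert (Nz : N z) by (unfold N; split; [|lra]; assert (d <= de) by apply Rmin_l; lra).
  assert (Z1 : Rabs (z - s) < dp) by (eapply Rlt_le_trans; [exact Hzs|]; unfold d; minle).
  assert (Z2 : Rabs (z - s) < dc) by (eapply Rlt_le_trans; [exact Hzs|]; unfold d; minle).
  assert (Z3 : Rabs (z - s) < db) by (eapply Rlt_le_trans; [exact Hzs|]; unfold d; minle).
  assert (Z4 : Rabs (z - s) < da) by (eapply Rlt_le_trans; [exact Hzs|]; unfold d; minle).
  assert (Z5 : Rabs (z - s) < dg1) by (eapply Rlt_le_trans; [exact Hzs|]; unfold d; minle).
  assert (Z6 : Rabs (z - s) < dg2) by (eapply Rlt_le_trans; [exact Hzs|]; unfold d; minle).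
  assert (Dz : dist2 (z,t') X < dp).
  { apply dist2_lt. simpl. split; [exact Z1| apply (Kc z t' Nz Z2 Rt')]. }
  assert (DX : dist2 X X < dp) by (apply dist2_self; exact Hdp).
  assert (Dpu : forall Y, dist2 Y X < dp -> dist2 Y X < pu) by (intros Y HY; eapply Rlt_le_trans; [exact HY| unfold dp; minle]).
  assert (Dpl : forall Y, dist2 Y X < dp -> dist2 Y X < pl) by (intros Y HY; eapply Rlt_le_trans; [exact HY| unfold dp; minle]).
  assert (Dpk : forall Y, dist2 Y X < dp -> dist2 Y X < pk) by (intros Y HY; eapply Rlt_le_trans; [exact HY| unfold dp; minle]).
  assert (Nsd : N (s - de)) by (unfold N; lra).
  destruct (Hedge s ltac:(unfold N; lra)) as [[Ihs Mhs] [Ils Mls]].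
  destruct (Hedge z Nz) as [[Ihz Mhz] [Ilz Mlz]].
  destruct (Hedge (s - de) Nsd) as [[Ihd _] [Ild _]].
  pose proof Rt' as [Pz Tz].
  assert (tle : t <= l s) by (apply Mhs; exact HX). assert (tge : lm s <= t) by (apply Mls; exact HX).
  assert (t'le : t' <= l z) by (apply Mhz; exact Pz). assert (t'ge : lm z <= t') by (apply Mlz; exact Pz).
  assert (Elz : l z = l s - r * (z - s)) by (unfold l, r; apply lin_affine; lra).
  assert (Elmz : lm z = lm s - rh * (z - s)) by (unfold lm, rh; apply lin_affine; lra).
  assert (Eld : l (s - de) = l s - r * (s - de - s)) by (unfold l, r; apply lin_affine; lra).
  assert (Elmd : lm (s - de) = lm s - rh * (s - de - s)) by (unfold lm, rh; apply lin_affine; lra).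
  destruct (Rtotal_order (G1 D X) c') as [GX|[GX|GX]].
  -
    assert (Et : t = l s).
    { destruct TX as [E|[[_ I]|[L _]]]; [unfold X in GX; lra| |unfold X in GX; lra].
      apply (hi_unique H s); [exact I| split; assumption]. }
    assert (Gz : G1 D (z,t') < c') by (apply (Kg1 GX z t' Nz Z5 Rt')).
    destruct Tz as [E|[[_ Iz]|[L _]]]; [lra| |lra].
    assert (Et' : t' = l z) by (apply (hi_unique H z); [exact Iz| split; assumption]).
    exists t', r. split; [exact Rt'|]. split.
    { split. intros _. apply (vset_up H a b z t' Hab Ha Et'). intros L. lra. }
    assert (rr0 : r <= r0).
    { destruct Vt as [V1 _]. specialize (V1 GX _ Ihd). simpl in V1. fold l in V1. rewrite Eld, Et in V1.
      assert (r * de <= r0 * de) by lra. apply (Rmult_le_reg_r de); lra. }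
    assert (Lp D c' r X <= Lp D c' r0 X).
    { unfold Lp. unfold X in GX. assert (0 <= (r0 - r) * (c' - G1 D X)) by (apply Rmult_le_pos; unfold X; lra). unfold X in *. nra. }
    assert (Lp D c' r (z,t') < Lp D c' r X).
    { apply (PU Et (z,t') X Pz HX (Dpu _ Dz) (Dpu _ DX)); simpl; [lra|].
      rewrite Et', Et, Elz. replace (l s - (l s - r * (z - s)) + r * (s - z)) with 0 by ring. lra. }
    unfold X in *. lra.
  -
    rewrite (Lp_C D c' r0 r X GX).
    destruct (Rtotal_order (G1 D (z,t')) c') as [Gz|[Gz|Gz]].
    + destruct Tz as [E|[[_ Iz]|[L _]]]; [lra| |lra].
      assert (Et' : t' = l z) by (apply (hi_unique H z); [exact Iz| split; assumption]).
      assert (Et : t = l s).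
      { destruct (Rle_lt_or_eq_dec _ _ tle) as [Lt|Eq]; [|exact Eq]. exfalso.
        specialize (Kb Lt z t' Nz Z3 Rt'). lra. }
      exists t', r. split; [exact Rt'|]. split.
      { split. intros _. apply (vset_up H a b z t' Hab Ha Et'). intros L. lra. }
      apply (PU Et (z,t') X Pz HX (Dpu _ Dz) (Dpu _ DX)); simpl; [lra|].
      rewrite Et', Et, Elz. replace (l s - (l s - r * (z - s)) + r * (s - z)) with 0 by ring. lra.
    + exists t', (mA1 D X / mB1 D X). split; [exact Rt'|]. split.
      { split; intros L; lra. }
      rewrite (Lp_C D c' r (mA1 D X / mB1 D X) X GX).
      apply (PK I (z,t') X Pz HX (Dpk _ Dz) (Dpk _ DX)); simpl; [lra|].
      rewrite Gz, GX. lra.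
    + destruct Tz as [E|[[L _]|[_ Iz]]]; [lra|lra|].
      assert (Et' : t' = lm z) by (apply (lo_unique H z); [exact Iz| split; assumption]).
      assert (Et : t = lm s).
      { destruct (Rle_lt_or_eq_dec _ _ tge) as [Lt|Eq]; [|symmetry; exact Eq]. exfalso.
        specialize (Ka Lt z t' Nz Z4 Rt'). lra. }
      exists t', rh. split; [exact Rt'|]. split.
      { split. intros L. lra. intros _. apply (vset_lo H a' b' z t' Hab' Ha' Et'). }
      rewrite (Lp_C D c' r rh X GX).
      apply (PL Et (z,t') X Pz HX (Dpl _ Dz) (Dpl _ DX)); simpl; [lra|].
      rewrite Et', Et, Elmz. replace (lm s - (lm s - rh * (z - s)) + rh * (s - z)) with 0 by ring. lra.
  -
    assert (Et : t = lm s).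
    { destruct TX as [E|[[L _]|[_ I]]]; [unfold X in GX; lra|unfold X in GX; lra|].
      apply (lo_unique H s); [exact I| split; assumption]. }
    assert (Gz : c' < G1 D (z,t')) by (apply (Kg2 GX z t' Nz Z6 Rt')).
    destruct Tz as [E|[[L _]|[_ Iz]]]; [lra|lra|].
    assert (Et' : t' = lm z) by (apply (lo_unique H z); [exact Iz| split; assumption]).
    exists t', rh. split; [exact Rt'|]. split.
    { split. intros L. lra. intros _. apply (vset_lo H a' b' z t' Hab' Ha' Et'). }
    assert (rr0 : r0 <= rh).
    { destruct Vt as [_ V1]. specialize (V1 GX _ Ild). simpl in V1. fold lm in V1. rewrite Elmd, Et in V1.
      assert (r0 * de <= rh * de) by lra. apply (Rmult_le_reg_r de); lra. }
    assert (Lp D c' rh X <= Lp D c' r0 X).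
    { unfold Lp. assert (0 <= (rh - r0) * (G1 D X - c')) by (apply Rmult_le_pos; lra). nra. }
    assert (Lp D c' rh (z,t') < Lp D c' rh X).
    { apply (PL Et (z,t') X Pz HX (Dpl _ Dz) (Dpl _ DX)); simpl; [lra|].
      rewrite Et', Et, Elmz. replace (lm s - (lm s - rh * (z - s)) + rh * (s - z)) with 0 by ring. lra. }
    unfold X in *. lra.
Qed.

Lemma seg_fst' H x y z : in_poly H x -> in_poly H y -> Rmin (fst x) (fst y) <= z <= Rmax (fst x) (fst y) ->
  exists u, in_poly H u /\ fst u = z.
Proof.
  intros Hx Hy Hz. assert (Hd : 0 < dist2 y x + 1).
  { unfold dist2, vnorm. pose proof (Rabs_pos (fst (vsub y x))). pose proof (Rmax_l (Rabs (fst (vsub y x))) (Rabs (snd (vsub y x)))). lra. }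
  destruct (seg_fst H x y x (dist2 y x + 1) z Hx Hy (dist2_self x _ Hd) ltac:(lra) Hz) as [u [A [_ B]]].
  exists u. auto.
Qed.

Lemma seg_snd' H x y z : in_poly H x -> in_poly H y -> Rmin (snd x) (snd y) <= z <= Rmax (snd x) (snd y) ->
  exists u, in_poly H u /\ snd u = z.
Proof.
  intros Hx Hy Hz. assert (Hd : 0 < dist2 y x + 1).
  { unfold dist2, vnorm. pose proof (Rabs_pos (fst (vsub y x))). pose proof (Rmax_l (Rabs (fst (vsub y x))) (Rabs (snd (vsub y x)))). lra. }
  destruct (seg_snd H x y x (dist2 y x + 1) z Hx Hy (dist2_self x _ Hd) ltac:(lra) Hz) as [u [A [_ B]]].
  exists u. auto.
Qed.

Definition Good D H c c' s := forall t r, Route D H c' s t -> Vset D H c' s t r -> c < Lp D c' r (s,t).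

Lemma core_mixed D H (HC : CoreHyp D H) x y : in_poly H x -> in_poly H y -> fst x < fst y -> snd y < snd x ->
  G0 D x = G0 D y -> G1 D x = G1 D y -> False.
Proof.
  intros Hx Hy H1 H2 E0 E1.
  set (c := G0 D x). set (c' := G1 D x).
  assert (Hsl : forall z, fst x <= z <= fst y -> exists t, in_poly H (z,t)).
  { intros z Hz. destruct (seg_fst' H x y z Hx Hy) as [u [Hu Eu]].
    { rewrite Rmin_left, Rmax_right by lra. exact Hz. }
    exists (snd u). destruct u. simpl in *. subst. exact Hu. }
  assert (Rx : Route D H c' (fst x) (snd x)) by (destruct x; split; [exact Hx| left; reflexivity]).
  assert (Ry : Route D H c' (fst y) (snd y)) by (destruct y; split; [exact Hy| left; unfold c'; simpl; symmetry; exact E1]).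
  assert (GY : Good D H c c' (fst y)).
  { apply (cont_induction (fst x) (fst y)); [exact H1| |].
    - intros s Hs Hor. destruct (RC_core D H HC c' (fst x) (fst y) s Hsl Hs) as [d [Hd K]].
      exists d. split; [exact Hd|]. intros z Hz Hzy t' r' Rt' Vt'.
      destruct (K z t' r' Hz Hzy Rt' Vt') as [t [r [Rt [Vt Lt]]]].
      destruct Hor as [Es|Gs].
      + subst s. assert (t = snd x) by (apply (route_unique D H HC c' (fst x)); assumption). subst t.
        assert (Lp D c' r (fst x, snd x) = c) by (unfold Lp, c, c'; destruct x; simpl; ring). lra.
      + specialize (Gs t r Rt Vt). lra.
    - intros s Hs Hbelow t r0 Rt Vt.
      destruct (LC_core D H HC c' (fst x) (fst y) s Hsl Hs t r0 Rt Vt) as [d [Hd K]].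
      set (z := s - Rmin d (s - fst x) / 2).
      assert (0 < Rmin d (s - fst x)) by (apply Rmin_glb_lt; lra).
      pose proof (Rmin_l d (s - fst x)). pose proof (Rmin_r d (s - fst x)).
      destruct (K z ltac:(unfold z; lra) ltac:(unfold z; lra)) as [t' [r' [Rt' [Vt' Lt]]]].
      specialize (Hbelow z ltac:(unfold z; lra) t' r' Rt' Vt'). lra. }
  specialize (GY (snd y) 0 Ry). 
  assert (Vset D H c' (fst y) (snd y) 0).
  { split; intros L; destruct y; unfold c' in *; simpl in *; lra. }
  specialize (GY H0). unfold Lp in GY. destruct y. simpl in GY. unfold c in GY. rewrite E0 in GY. lra.
Qed.

Lemma core_inj D H (HC : CoreHyp D H) x y : in_poly H x -> in_poly H y ->
  G0 D x = G0 D y -> G1 D x = G1 D y -> x = y.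
Proof.
  intros Hx Hy E0 E1.
  assert (Same : forall u v, in_poly H u -> in_poly H v -> fst u <= fst v -> snd u <= snd v ->
           G0 D u = G0 D v -> G1 D u = G1 D v -> u = v).
  { intros u v Hu Hv L1 L2 F0 F1.
    pose proof (ch_mg0 D H HC _ _ L1). pose proof (ch_mh0 D H HC _ _ L2).
    pose proof (ch_mg1 D H HC _ _ L1). pose proof (ch_mh1 D H HC _ _ L2).
    unfold G0, G1 in *.
    assert (Ef : fst u = fst v).
    { destruct (Rle_lt_or_eq_dec _ _ L1) as [Lt|Eq]; [exfalso|exact Eq].
      destruct (MVT_cor2 (g0 D) (a0 D) (fst u) (fst v) Lt (fun c _ => ch_dg0 D H HC c)) as [c [Ec Hc]].
      destruct (seg_fst' H u v c Hu Hv) as [w [Hw Ew]]. { rewrite Rmin_left, Rmax_right by lra. lra. }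
      destruct (ch_pos D H HC w Hw) as [Pa _]. unfold mA0 in Pa. rewrite Ew in Pa.
      assert (0 < a0 D c * (fst v - fst u)) by (apply Rmult_lt_0_compat; lra). lra. }
    assert (Es : snd u = snd v).
    { destruct (Rle_lt_or_eq_dec _ _ L2) as [Lt|Eq]; [exfalso|exact Eq].
      destruct (MVT_cor2 (h1 D) (b1 D) (snd u) (snd v) Lt (fun c _ => ch_dh1 D H HC c)) as [c [Ec Hc]].
      destruct (seg_snd' H u v c Hu Hv) as [w [Hw Ew]]. { rewrite Rmin_left, Rmax_right by lra. lra. }
      destruct (ch_pos D H HC w Hw) as [_ [Pb _]]. unfold mB1 in Pb. rewrite Ew in Pb.
      assert (0 < b1 D c * (snd v - snd u)) by (apply Rmult_lt_0_compat; lra). lra. }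
    destruct u, v; simpl in *; subst; reflexivity. }
  destruct (Rle_or_lt (fst x) (fst y)) as [L1|L1]; destruct (Rle_or_lt (snd x) (snd y)) as [L2|L2].
  - apply Same; auto.
  - destruct (Rle_lt_or_eq_dec _ _ L1) as [Lt|Eq].
    + exfalso. apply (core_mixed D H HC x y); auto.
    + symmetry. apply Same; try assumption; try lra; symmetry; assumption.
  - destruct (Rle_lt_or_eq_dec _ _ L2) as [Lt|Eq].
    + exfalso. apply (core_mixed D H HC y x); auto.
    + symmetry. apply Same; try assumption; try lra; symmetry; assumption.
  - symmetry. apply Same; try assumption; try lra; symmetry; assumption.
Qed.

Lemma mat_dist_entries M N e : mat_dist M N < e ->
  Rabs (fst (fst M) - fst (fst N)) < e /\ Rabs (snd (fst M) - snd (fst N)) < e /\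
  Rabs (fst (snd M) - fst (snd N)) < e /\ Rabs (snd (snd M) - snd (snd N)) < e.
Proof.
  unfold mat_dist. intros Hm.
  assert (H1 : dist2 (fst M) (fst N) < e) by (eapply Rle_lt_trans; [apply Rmax_l| exact Hm]).
  assert (H2 : dist2 (snd M) (snd N) < e) by (eapply Rle_lt_trans; [apply Rmax_r| exact Hm]).
  apply dist2_lt in H1. apply dist2_lt in H2. tauto.
Qed.

Definition gz p (F : bool -> bool -> R -> R) z s := p false z * F false z s.
Definition hz p (F : bool -> bool -> R -> R) z t := p true z * F true z t.
Definition az p (f : bool -> bool -> R -> R) z s := fYD p f s false z.
Definition bz p (f : bool -> bool -> R -> R) z t := fYD p f t true z.
Definition mkD p F f z0 z1 := mkDat (gz p F z0) (gz p F z1) (hz p F z0) (hz p F z1)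
                                    (az p f z0) (az p f z1) (bz p f z0) (bz p f z1).

Lemma der_scal (F : R -> R) l c s : derivable_pt_lim F s l -> derivable_pt_lim (fun x => c * F x) s (l * c).
Proof. intros Hd. rewrite Rmult_comm. apply (derivable_pt_lim_scal F c s l Hd). Qed.

Lemma G0_Pi tau p F z0 z1 u : G0 (mkD p F (fun _ _ _ => 0) z0 z1) u = Pi_comp tau p F z0 u + tau.
Proof. unfold G0, mkD, Pi_comp, gz, hz; simpl. ring. Qed.

Definition Msel (sw : bool) (M : mat2) : mat2 := if sw then swap_rows M else M.
Definition zz (sw : bool) := if sw then (true, false) else (false, true).

Lemma Msel_entries p f sw u :
  Msel sw (dPi p f u) = ((az p f (fst (zz sw)) (fst u), bz p f (fst (zz sw)) (snd u)),
                         (az p f (snd (zz sw)) (fst u), bz p f (snd (zz sw)) (snd u))).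
Proof. destruct sw; reflexivity. Qed.

Lemma det_pert A B C E : A*E - B*C <> 0 ->
  exists e, 0 < e /\ forall a b c d x y, Rabs (a - A) < e -> Rabs (b - B) < e -> Rabs (c - C) < e -> Rabs (d - E) < e ->
    a*x + b*y = 0 -> c*x + d*y = 0 -> x = 0 /\ y = 0.
Proof.
  intros Hdet. set (D0 := Rabs (A*E - B*C)). assert (HD : 0 < D0) by (apply Rabs_pos_lt; exact Hdet).
  set (K := Rabs A + Rabs B + Rabs C + Rabs E + 2).
  assert (HK : 2 <= K) by (unfold K; pose proof (Rabs_pos A); pose proof (Rabs_pos B); pose proof (Rabs_pos C); pose proof (Rabs_pos E); lra).
  exists (Rmin 1 (D0 / (2*K))). split. { apply Rmin_glb_lt; [lra| apply Rdiv_lt_0_compat; lra]. }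
  intros a b c d x y Ha Hb Hc Hd E1 E2.
  set (e := Rmin 1 (D0 / (2*K))) in *. 
  assert (Ee1 : e <= 1) by apply Rmin_l. assert (Ee2 : e <= D0/(2*K)) by apply Rmin_r.
  assert (Ee3 : e * (2*K) <= D0) by (apply (Rmult_le_compat_r (2*K)) in Ee2; [|lra]; replace (D0 / (2*K) * (2*K)) with D0 in Ee2 by (field; lra); exact Ee2).
  clearbody e.
  assert (Hd' : Rabs d <= Rabs E + 1) by (replace d with ((d - E) + E) by ring; eapply Rle_trans; [apply Rabs_triang|]; lra).
  assert (Hc' : Rabs c <= Rabs C + 1) by (replace c with ((c - C) + C) by ring; eapply Rle_trans; [apply Rabs_triang|]; lra).
  assert (T1 : Rabs ((a - A)*d) <= e * (Rabs E + 1)) by (rewrite Rabs_mult; apply Rmult_le_compat; try apply Rabs_pos; lra).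
  assert (T2 : Rabs (A*(d - E)) <= e * Rabs A) by (rewrite Rabs_mult, Rmult_comm; apply Rmult_le_compat_r; [apply Rabs_pos|lra]).
  assert (T3 : Rabs ((b - B)*c) <= e * (Rabs C + 1)) by (rewrite Rabs_mult; apply Rmult_le_compat; try apply Rabs_pos; lra).
  assert (T4 : Rabs (B*(c - C)) <= e * Rabs B) by (rewrite Rabs_mult, Rmult_comm; apply Rmult_le_compat_r; [apply Rabs_pos|lra]).
  apply abs_le in T1. apply abs_le in T2. apply abs_le in T3. apply abs_le in T4.
  assert (Edet : a*d - b*c = (A*E - B*C) + (a - A)*d + A*(d - E) - (b - B)*c - B*(c - C)) by ring.
  assert (Hne : a*d - b*c <> 0).
  { intros Z. assert (Hb1 : Rabs (A*E - B*C) <= e * K).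
    { assert (Heq : A*E - B*C = - ((a - A)*d + A*(d - E) - (b - B)*c - B*(c - C))) by lra.
      rewrite Heq. rewrite Rabs_Ropp. apply Rabs_le. unfold K. lra. }
    fold D0 in Hb1. lra. }
  assert (H0 : x * (a*d - b*c) = 0) by (replace (x * (a*d - b*c)) with (d*(a*x + b*y) - b*(c*x + d*y)) by ring; rewrite E1, E2; ring).
  assert (H1 : y * (a*d - b*c) = 0) by (replace (y * (a*d - b*c)) with (a*(c*x + d*y) - c*(a*x + b*y)) by ring; rewrite E1, E2; ring).
  split; [apply (Rmult_eq_reg_r (a*d - b*c)); [rewrite Rmult_0_l; exact H0|exact Hne] |
          apply (Rmult_eq_reg_r (a*d - b*c)); [rewrite Rmult_0_l; exact H1|exact Hne]].
Qed.

Lemma dist2_coord_fst x q d : Rabs (x - fst q) < d -> 0 < d -> dist2 (x, snd q) q < d.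
Proof. intros. apply dist2_lt. simpl. rewrite Rminus_diag, Rabs_R0. auto. Qed.
Lemma dist2_coord_snd x q d : Rabs (x - snd q) < d -> 0 < d -> dist2 (fst q, x) q < d.
Proof. intros. apply dist2_lt. simpl. rewrite Rminus_diag, Rabs_R0. auto. Qed.

Lemma between_abs x y c d : Rmin x y <= c <= Rmax x y -> Rabs (y - x) < d -> Rabs (c - x) < d.
Proof.
  intros Hc Hy. apply Rabs_def2 in Hy. destruct (Rle_or_lt x y) as [L|L].
  - rewrite Rmin_left, Rmax_right in Hc by lra. apply Rabs_def1; lra.
  - rewrite Rmin_right, Rmax_left in Hc by lra. apply Rabs_def1; lra.
Qed.

Lemma part_i tau p F f q : model p F f -> Pi tau p F q = (0,0) ->
  cont_on (fun _ => True) (dPi p f) -> det2 (dPi p f q) <> 0 ->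
  exists eps, 0 < eps /\ forall y, dist2 y q < eps -> Pi tau p F y = (0,0) -> y = q.
Proof.
  intros [_ [_ [_ [_ Hder]]]] Hq Hc Hdet.
  unfold det2, dPi in Hdet; simpl in Hdet.
  destruct (det_pert _ _ _ _ Hdet) as [e [He K]].
  destruct (Hc q I e He) as [d [Hd Kc]].
  exists d. split; [exact Hd|]. intros y Hy Hpy.
  apply dist2_lt in Hy. destruct Hy as [Hy0 Hy1].
  destruct (mvt_gen (F false false) (f false false) (fst q) (fst y) (Hder false false)) as [x0 [Hx0 E0]].
  destruct (mvt_gen (F false true) (f false true) (fst q) (fst y) (Hder false true)) as [x1 [Hx1 E1]].
  destruct (mvt_gen (F true false) (f true false) (snd q) (snd y) (Hder true false)) as [y0 [Hy0' F0]].
  destruct (mvt_gen (F true true) (f true true) (snd q) (snd y) (Hder true true)) as [y1 [Hy1' F1]].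
  pose proof (Kc (x0, snd q) I (dist2_coord_fst _ _ _ (between_abs _ _ _ _ Hx0 Hy0) Hd)) as M0.
  pose proof (Kc (x1, snd q) I (dist2_coord_fst _ _ _ (between_abs _ _ _ _ Hx1 Hy0) Hd)) as M1.
  pose proof (Kc (fst q, y0) I (dist2_coord_snd _ _ _ (between_abs _ _ _ _ Hy0' Hy1) Hd)) as M2.
  pose proof (Kc (fst q, y1) I (dist2_coord_snd _ _ _ (between_abs _ _ _ _ Hy1' Hy1) Hd)) as M3.
  apply mat_dist_entries in M0, M1, M2, M3. unfold dPi in M0, M1, M2, M3; simpl in M0, M1, M2, M3.
  destruct M0 as [M0 _]. destruct M1 as [_ [_ [M1 _]]]. destruct M2 as [_ [M2 _]]. destruct M3 as [_ [_ [_ M3]]].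
  unfold Pi in Hq, Hpy. injection Hq as Q0 Q1. injection Hpy as P0 P1.
  unfold Pi_comp in *.
  destruct (K _ _ _ _ (fst y - fst q) (snd y - snd q) M0 M2 M1 M3) as [Z0 Z1].
  - unfold fYD. 
    replace (f false false x0 * p false false * (fst y - fst q) + f true false y0 * p true false * (snd y - snd q))
      with (p false false * (F false false (fst y) - F false false (fst q)) + p true false * (F true false (snd y) - F true false (snd q)))
      by (rewrite E0, F0; ring). lra.
  - unfold fYD.
    replace (f false true x1 * p false true * (fst y - fst q) + f true true y1 * p true true * (snd y - snd q))
      with (p false true * (F false true (fst y) - F false true (fst q)) + p true true * (F true true (snd y) - F true true (snd q)))
      by (rewrite E1, F1; ring). lra.
  - destruct y, q; simpl in *. f_equal; lra.
Qed.

Lemma span_all H : is_polytope H -> forall v, span_face (in_poly H) v.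
Proof.
  intros [_ [y [eps [He Hin]]]] v.
  set (n := vnorm v). assert (Hn : 0 <= n) by (unfold n, vnorm; pose proof (Rabs_pos (fst v)); pose proof (Rmax_l (Rabs (fst v)) (Rabs (snd v))); lra).
  set (l := eps / (2 * (n + 1))). assert (Hl : 0 < l) by (unfold l; apply Rdiv_lt_0_compat; lra).
  set (u := (fst y + l * fst v, snd y + l * snd v)).
  assert (Hu : in_poly H u).
  { apply Hin. apply dist2_lt. unfold u; simpl.
    replace (fst y + l * fst v - fst y) with (l * fst v) by ring.
    replace (snd y + l * snd v - snd y) with (l * snd v) by ring.
    rewrite !Rabs_mult, !(Rabs_right l) by lra.
    assert (Rabs (fst v) <= n) by apply Rmax_l. assert (Rabs (snd v) <= n) by apply Rmax_r.
    assert (l * n < eps).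
    { unfold l. apply Rle_lt_trans with (eps / 2). 
      apply (Rmult_le_reg_r (2 * (n + 1))); [lra|]. 
      replace (eps / (2 * (n + 1)) * n * (2 * (n + 1))) with (eps * n) by (field; lra).
      replace (eps / 2 * (2 * (n + 1))) with (eps * (n + 1)) by field. nra. lra. }
    split; nra. }
  exists u, y, y, y, (/ l), 0. split; [exact Hu|]. split; [apply Hin, dist2_self; exact He|].
  split; [apply Hin, dist2_self; exact He|]. split; [apply Hin, dist2_self; exact He|].
  destruct v as [v0 v1]. unfold vadd, vscal, vsub, u; simpl. f_equal; field; lra.
Qed.

Lemma Qf_of_dot D (M : mat2) u a0' a1' :
  M = ((mA0 D u, mB0 D u), (mA1 D u, mB1 D u)) -> a1' <> 0 ->
  let n := sqrt (a0'*a0' + a1'*a1') in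
  0 < dot (a1' / n, - a0' / n) (mat_app M (a1' / n, - a0' / n)) -> 0 < Qf D u (a0' / a1').
Proof.
  intros EM Ha n Hd. subst M.
  assert (Hpos : 0 < a0'*a0' + a1'*a1') by nra.
  assert (Hn : 0 < n) by (apply sqrt_lt_R0; exact Hpos).
  assert (Hnn : n * n = a0'*a0' + a1'*a1') by (apply sqrt_sqrt; lra).
  unfold dot, mat_app in Hd; simpl in Hd.
  assert (E : Qf D u (a0'/a1') = (n*n/(a1'*a1')) * ((a1' / n) * (mA0 D u * (a1' / n) + mB0 D u * (- a0' / n)) +
       (- a0' / n) * (mA1 D u * (a1' / n) + mB1 D u * (- a0' / n)))).
  { unfold Qf. field. split; lra. }
  rewrite E. apply Rmult_lt_0_compat; [|exact Hd]. apply Rdiv_lt_0_compat; nra.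
Qed.

Lemma Msel_D p F f sw u :
  Msel sw (dPi p f u) = ((mA0 (mkD p F f (fst (zz sw)) (snd (zz sw))) u, mB0 (mkD p F f (fst (zz sw)) (snd (zz sw))) u),
                         (mA1 (mkD p F f (fst (zz sw)) (snd (zz sw))) u, mB1 (mkD p F f (fst (zz sw)) (snd (zz sw))) u)).
Proof. destruct sw; reflexivity. Qed.

Lemma edge_from_face p F f sw H a b (u1 u2 u : R2) :
  (forall Fc, is_face (in_poly H) Fc -> forall y, Fc y -> proj_det_pos (span_face Fc) (Msel sw (dPi p f y))) ->
  In (a,b) H -> snd a <> 0 -> in_poly H u1 -> in_poly H u2 -> dot a u1 = b -> dot a u2 = b -> u1 <> u2 ->
  in_poly H u -> dot a u = b -> 0 < Qf (mkD p F f (fst (zz sw)) (snd (zz sw))) u (fst a / snd a).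
Proof.
  intros HF Hab Ha H1 H2 E1 E2 Ne Hu Eu.
  set (Fc := fun w => in_poly H w /\ dot a w = b).
  assert (Hface : is_face (in_poly H) Fc).
  { right. exists a, b. split. { intros Z. apply Ha. rewrite Z. reflexivity. }
    split. { intros w Hw. apply (Hw (a,b) Hab). }
    split. { exists u1. auto. }
    intros w. unfold Fc. tauto. }
  destruct (HF Fc Hface u (conj Hu Eu)) as [_ Hline].
  set (a0' := fst a). set (a1' := snd a).
  set (n := sqrt (a0'*a0' + a1'*a1')).
  assert (Hpos : 0 < a0'*a0' + a1'*a1') by (unfold a1' in *; nra).
  assert (Hn : 0 < n) by (apply sqrt_lt_R0; exact Hpos).
  assert (Hnn : n * n = a0'*a0' + a1'*a1') by (apply sqrt_sqrt; lra).
  assert (Ha' : a1' <> 0) by exact Ha.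
  apply (Qf_of_dot _ (Msel sw (dPi p f u)) u a0' a1' (Msel_D p F f sw u) Ha).
  fold n. apply Hline.
  - unfold dot; simpl. replace (a1' / n * (a1' / n) + - a0' / n * (- a0' / n)) with ((a0'*a0' + a1'*a1') / (n*n)) by (field; lra).
    rewrite <- Hnn. field. lra.
  - intros v. split.
    + intros [w1 [x1 [w2 [x2 [s [t [Hw1 [Hx1 [Hw2 [Hx2 Ev]]]]]]]]]].
      destruct Hw1 as [_ D1]. destruct Hx1 as [_ D2]. destruct Hw2 as [_ D3]. destruct Hx2 as [_ D4].
      exists (n * (s * (fst w1 - fst x1) + t * (fst w2 - fst x2)) / a1').
      subst v. unfold dot in D1, D2, D3, D4. fold a0' a1' in D1, D2, D3, D4.
      unfold vadd, vscal, vsub; simpl. f_equal.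
      * field. split; [lra|exact Ha'].
      * assert (a1' * (snd w1 - snd x1) = - a0' * (fst w1 - fst x1)) by lra.
        assert (a1' * (snd w2 - snd x2) = - a0' * (fst w2 - fst x2)) by lra.
        apply (Rmult_eq_reg_l a1'); [|exact Ha].
        transitivity (- a0' * (s * (fst w1 - fst x1) + t * (fst w2 - fst x2))).
        { replace (a1' * (s * (snd w1 - snd x1) + t * (snd w2 - snd x2))) with (s * (a1' * (snd w1 - snd x1)) + t * (a1' * (snd w2 - snd x2))) by ring.
          rewrite H0, H3. ring. }
        field. split; [lra|exact Ha'].
    + intros [k Ek].
      set (d0 := fst u1 - fst u2).
      assert (Hd0 : d0 <> 0).
      { intros Z. apply Ne. unfold dot in E1, E2. fold a0' a1' in E1, E2.
        assert (fst u1 = fst u2) by (unfold d0 in Z; lra).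
        assert (a1' * (snd u1 - snd u2) = 0) by nra.
        assert (snd u1 = snd u2).
        { apply Rmult_integral in H3. destruct H3; [contradiction|lra]. }
        destruct u1, u2; simpl in *; subst; reflexivity. }
      exists u1, u2, u1, u1, (k * a1' / (n * d0)), 0.
      split; [split; auto|]. split; [split; auto|]. split; [split; auto|]. split; [split; auto|].
      subst v. unfold dot in E1, E2. fold a0' a1' in E1, E2.
      assert (Hsnd : a1' * (snd u1 - snd u2) = - a0' * d0) by (unfold d0; lra).
      unfold vadd, vscal, vsub; simpl. f_equal.
      * unfold d0. field. repeat split; try exact Hd0; try exact Ha'; try lra.
      * apply (Rmult_eq_reg_l a1'); [|exact Ha].
        symmetry. transitivity (k * a1' / (n * d0) * (a1' * (snd u1 - snd u2))); [ring|].
        rewrite Hsnd. field. repeat split; try exact Hd0; try exact Ha'; try lra.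
Qed.

Lemma az_nonneg p F f z s : model p F f -> 0 <= az p f z s.
Proof.
  intros [Hp [_ [_ [Hcdf Hder]]]]. unfold az, fYD. apply Rmult_le_pos; [|apply Hp].
  apply (der_nonneg (F false z) s); [apply (proj1 (Hcdf false z))| apply Hder].
Qed.
Lemma bz_nonneg p F f z s : model p F f -> 0 <= bz p f z s.
Proof.
  intros [Hp [_ [_ [Hcdf Hder]]]]. unfold bz, fYD. apply Rmult_le_pos; [|apply Hp].
  apply (der_nonneg (F true z) s); [apply (proj1 (Hcdf true z))| apply Hder].
Qed.

Lemma core_hyp p F f H sw : model p F f -> is_polytope H -> cont_on (in_poly H) (dPi p f) ->
  (forall Fc, is_face (in_poly H) Fc -> forall y, Fc y -> proj_det_pos (span_face Fc) (Msel sw (dPi p f y))) ->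
  CoreHyp (mkD p F f (fst (zz sw)) (snd (zz sw))) H.
Proof.
  intros Hm Hpt Hct HF. pose proof Hm as [Hp [_ [_ [Hcdf Hder]]]].
  assert (Dg : forall z s, derivable_pt_lim (gz p F z) s (az p f z s)).
  { intros z s. unfold gz, az, fYD. apply der_scal. apply Hder. }
  assert (Dh : forall z s, derivable_pt_lim (hz p F z) s (bz p f z s)).
  { intros z s. unfold hz, bz, fYD. apply der_scal. apply Hder. }
  assert (Mg : forall z x y, x <= y -> gz p F z x <= gz p F z y).
  { intros z x y L. unfold gz. apply Rmult_le_compat_l; [apply Hp| apply (proj1 (Hcdf false z)); exact L]. }
  assert (Mh : forall z x y, x <= y -> hz p F z x <= hz p F z y).
  { intros z x y L. unfold hz. apply Rmult_le_compat_l; [apply Hp| apply (proj1 (Hcdf true z)); exact L]. }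
  constructor; simpl; auto.
  - destruct Hpt as [[M HM] _]. exists M. exact HM.
  - intros u Hu.
    assert (Hface : is_face (in_poly H) (in_poly H)) by (left; intros; tauto).
    destruct (HF _ Hface u Hu) as [Hall _]. specialize (Hall (span_all H Hpt)).
    rewrite (Msel_D p F f sw u) in Hall. unfold det2 in Hall; simpl in Hall.
    unfold detD. unfold mA0, mA1, mB0, mB1 in *; simpl in *.
    pose proof (az_nonneg p F f (fst (zz sw)) (fst u) Hm). pose proof (az_nonneg p F f (snd (zz sw)) (fst u) Hm).
    pose proof (bz_nonneg p F f (fst (zz sw)) (snd u) Hm). pose proof (bz_nonneg p F f (snd (zz sw)) (snd u) Hm).
    assert (0 <= bz p f (fst (zz sw)) (snd u) * az p f (snd (zz sw)) (fst u)) by (apply Rmult_le_pos; auto).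
    split; [|split]; [nra|nra|lra].
  - intros u Hu e He. destruct (Hct u Hu e He) as [d [Hd K]]. exists d. split; [exact Hd|].
    intros v Hv Hdv. specialize (K v Hv Hdv). apply mat_dist_entries in K. unfold dPi in K; simpl in K.
    unfold mA0, mA1, mB0, mB1, az, bz; simpl. destruct sw; simpl; tauto.
  - intros a b Hab Ha u1 u2 H1 H2 E1 E2 Ne u Hu Eu.
    apply (edge_from_face p F f sw H a b u1 u2 u HF Hab Ha H1 H2 E1 E2 Ne Hu Eu).
Qed.

Theorem theorem2 (tau : R) (p : bool -> bool -> R) (F f : bool -> bool -> R -> R) (q : R2) :
  0 < tau < 1 ->
  model p F f ->
  (forall y, is_jacobian (Pi tau p F) y (dPi p f y)) ->
  Pi tau p F q = (0, 0) ->
  ((cont_on (fun _ => True) (dPi p f) /\ det2 (dPi p f q) <> 0 ->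
    exists eps, 0 < eps /\
      forall y, dist2 y q < eps -> Pi tau p F y = (0, 0) -> y = q) /\
   (forall (Lset : R2 -> Prop) (Ls : list halfspaces),
      Lset q ->
      (forall y, Lset y -> exists H, In H Ls /\ in_poly H y) ->
      (forall H, In H Ls ->
         is_polytope H /\ in_poly H q /\ cont_on (in_poly H) (dPi p f) /\
         exists sw : bool, forall Fc, is_face (in_poly H) Fc ->
           forall y, Fc y ->
             proj_det_pos (span_face Fc)
               ((if sw then swap_rows else (fun M => M)) (dPi p f y))) ->
      forall y, Lset y -> Pi tau p F y = (0, 0) -> y = q)).
Proof.
  intros Htau Hm Hjac Hq. split.
  - intros [Hc Hdet]. apply (part_i tau p F f q Hm Hq Hc Hdet).
  - intros Lset Ls HqL Hcov Hpoly y HyL Hy.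
    destruct (Hcov y HyL) as [H [HIn Hy']]. destruct (Hpoly H HIn) as [Hpt [HqH [Hct [sw HF]]]].
    assert (HF' : forall Fc, is_face (in_poly H) Fc -> forall y, Fc y -> proj_det_pos (span_face Fc) (Msel sw (dPi p f y))).
    { intros Fc HFc z Hz. specialize (HF Fc HFc z Hz). destruct sw; exact HF. }
    pose proof (core_hyp p F f H sw Hm Hpt Hct HF') as HC.
    unfold Pi in Hq, Hy. injection Hq as Q0 Q1. injection Hy as Y0 Y1.
    apply (core_inj _ H HC y q Hy' HqH); unfold G0, G1, mkD, gz, hz; simpl; unfold Pi_comp in *;
      destruct sw; simpl; lra.
Qed.
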